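(* Each of the formulas D1 $=i(x,x)$, D2 $=i(i(x,x),i(n(x),n(x)))$, D3 $=i(i(x,x),i(i(y,y),i(i(x,y),i(x,y))))$ has a double-negation-free condensed-detachment proof from the axioms L1 $=i(i(x,y),i(i(y,z),i(x,z)))$, L2 $=i(i(n(x),x),x)$, L3 $=i(x,i(n(x),y))$.
   Context: Formulas are terms built from propositional variables using the binary connective $i$ (implication) and the unary connective $n$ (negation). Condensed detachment: from a major premiss $i(A,B)$ and a minor premiss $C$, after renaming variables so that the two premisses share no variables, if $A$ and $C$ are unifiable with most general unifier $\sigma$, infer $B\sigma$; alphabetic variants of axioms count as axioms and conclusions may be renamed. A proof is double-negation free if none of its deduced (non-axiom) steps has a subformula of the form $n(n(t))$. *)

(* Defs.v *)
From Stdlib Require Import List Arith.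
Import ListNotations.

Inductive form : Type :=
| V : nat -> form
| I : form -> form -> form
| N : form -> form.

Fixpoint subst (s : nat -> form) (f : form) : form :=
  match f with
  | V k => s k
  | I a b => I (subst s a) (subst s b)
  | N a => N (subst s a)
  end.

Definition renaming (r : nat -> nat) : Prop := forall m n, r m = r n -> m = n.
Definition rename (r : nat -> nat) (f : form) : form := subst (fun k => V (r k)) f.

Fixpoint occurs (k : nat) (f : form) : Prop :=
  match f with
  | V m => m = k
  | I a b => occurs k a \/ occurs k b
  | N a => occurs k a
  end.

Definition unifier (s : nat -> form) (a b : form) : Prop := subst s a = subst s b.

Definition mgu (s : nat -> form) (a b : form) : Prop :=
  unifier s a b /\
  forall t, unifier t a b -> exists r, forall k, t k = subst r (s k).

(** Condensed detachment: from major [maj] = i(A,B) and minor [min]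
    (renamed apart), with mgu s of A and min, infer B s (up to renaming). *)
Definition cd (maj min concl : form) : Prop :=
  exists (r1 r2 r3 : nat -> nat) (s : nat -> form) (A B : form),
    renaming r1 /\ renaming r2 /\ renaming r3 /\
    rename r1 maj = I A B /\
    (forall k, occurs k (rename r1 maj) -> ~ occurs k (rename r2 min)) /\
    mgu s A (rename r2 min) /\
    concl = rename r3 (subst s B).

Definition x := V 0.
Definition y := V 1.
Definition z := V 2.

Definition L1 := I (I x y) (I (I y z) (I x z)).
Definition L2 := I (I (N x) x) x.
Definition L3 := I x (I (N x) y).

Definition D1 := I x x.
Definition D2 := I (I x x) (I (N x) (N x)).
Definition D3 := I (I x x) (I (I y y) (I (I x y) (I x y))).

Definition is_axiom (f : form) : Prop :=
  exists r ax, renaming r /\ (ax = L1 \/ ax = L2 \/ ax = L3) /\ f = rename r ax.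

(** Justification of a proof line: axiom, or CD with major line i and minor line j. *)
Inductive just : Type :=
| Ax : just
| Det : nat -> nat -> just.

Definition proof := list (form * just).

Definition valid_proof (p : proof) : Prop :=
  forall k e, nth_error p k = Some e ->
    match snd e with
    | Ax => is_axiom (fst e)
    | Det i j => i < k /\ j < k /\
        exists a b, nth_error p i = Some a /\ nth_error p j = Some b /\
                    cd (fst a) (fst b) (fst e)
    end.

Definition concludes (p : proof) (f : form) : Prop :=
  exists jf, nth_error p (length p - 1) = Some (f, jf).

Fixpoint has_nn (f : form) : Prop :=
  match f with
  | V _ => False
  | I a b => has_nn a \/ has_nn b
  | N a => (match a with N _ => True | _ => False end) \/ has_nn a
  end.

Definition dn_free (p : proof) : Prop :=
  forall k e, nth_error p k = Some e -> snd e <> Ax -> ~ has_nn (fst e).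

Definition dnf_cd_provable (f : form) : Prop :=
  exists p, valid_proof p /\ concludes p f /\ dn_free p.

(* Main.v *)
Require Import Defs.
From Stdlib Require Import List Arith Lia.
Import ListNotations.

Fixpoint maxv (f : form) : nat :=
  match f with V k => k | I a b => Nat.max (maxv a) (maxv b) | N a => maxv a end.

Lemma occurs_le k f : occurs k f -> k <= maxv f.
Proof. induction f; simpl; intros H; [lia| destruct H; [apply IHf1 in H|apply IHf2 in H]; lia | auto]. Qed.

Lemma occurs_shift k o f : occurs k (rename (fun j => j + o) f) -> o <= k.
Proof. unfold rename; induction f; simpl; intros H; [lia| destruct H; auto | auto]. Qed.

Lemma subst_id f : subst (fun k => V k) f = f.
Proof. induction f; simpl; congruence. Qed.

Lemma renaming_shift o : renaming (fun j => j + o).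
Proof. intros m n; lia. Qed.

Lemma renaming_id : renaming (fun j => j).
Proof. intros m n; auto. Qed.

Lemma renaming_inv (r r' : nat -> nat) : (forall k, r' (r k) = k) -> renaming r.
Proof. intros H m n E. rewrite <- (H m), <- (H n), E. reflexivity. Qed.

Fixpoint lk {A} (l : list A) (k : nat) (d : A) : A :=
  match l with [] => d | x :: t => match k with 0 => x | S k' => lk t k' d end end.
Definition lsub (ls : list form) : nat -> form := fun k => lk ls k (V k).
Definition lren (l : list nat) : nat -> nat := fun k => lk l k k.

Lemma mgu_intro s a b : unifier s a b ->
  (forall t, unifier t a b -> forall k, t k = subst t (s k)) -> mgu s a b.
Proof. intros H1 H2; split; auto. intros t Ht; exists t; auto. Qed.

Lemma cd_intro maj mn concl A B o ls lp lq :
  maj = I A B ->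
  Nat.ltb (maxv maj) o = true ->
  mgu (lsub ls) A (rename (fun j => j + o) mn) ->
  (forall k, lren lq (lren lp k) = k) ->
  concl = rename (lren lp) (subst (lsub ls) B) ->
  cd maj mn concl.
Proof.
  intros Hm Ho Hg Hp Hc.
  exists (fun j => j), (fun j => j + o), (lren lp), (lsub ls), A, B.
  apply Nat.ltb_lt in Ho.
  split; [apply renaming_id|]. split; [apply renaming_shift|].
  split; [eapply renaming_inv; exact Hp|].
  unfold rename at 1 2; rewrite subst_id.
  split; [exact Hm|]. split.
  - intros k H1 H2. apply occurs_le in H1. apply occurs_shift in H2. lia.
  - split; [exact Hg| exact Hc].
Qed.

Ltac mloop k := first [ reflexivity | destruct k as [|k]; [simpl; congruence | mloop k] ].
Ltac solve_mgu :=
  apply mgu_intro; [reflexivity|];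
  let t := fresh "t" in let H := fresh "H" in let k := fresh "k" in
  intros t H k; unfold unifier in H; simpl in H; mloop k.

Ltac ploop k := first [ reflexivity | destruct k as [|k]; [reflexivity | ploop k] ].
Ltac solve_perm := let k := fresh "k" in intros k; ploop k.

Ltac solve_cd o ls lp lq :=
  eapply (cd_intro _ _ _ _ _ o ls lp lq); [reflexivity|reflexivity|solve_mgu|solve_perm|reflexivity].

Definition d1_f0 := (I (I (V 0) (V 1)) (I (I (V 1) (V 2)) (I (V 0) (V 2)))).
Definition d1_f1 := (I (V 0) (I (N (V 0)) (V 1))).
Definition d1_f2 := (I (I (I (N (V 0)) (V 1)) (V 2)) (I (V 0) (V 2))).
Definition d1_f3 := (I (I (N (V 0)) (V 0)) (V 0)).
Definition d1_f4 := (I (V 0) (V 0)).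
Lemma d1_s2 : cd d1_f0 d1_f1 d1_f2.
Proof. unfold d1_f0, d1_f1, d1_f2.
  solve_cd 3 [(V 3); (I (N (V 3)) (V 4)); (V 2); (V 3); (V 4)] [3; 4; 2; 0; 1] [3; 4; 2; 0; 1].
Qed.
Lemma d1_s4 : cd d1_f2 d1_f3 d1_f4.
Proof. unfold d1_f2, d1_f3, d1_f4.
  solve_cd 3 [(V 3); (V 3); (V 3); (V 3)] [1; 2; 3; 0] [3; 0; 1; 2].
Qed.
Definition d1_p : proof := [(d1_f0, Ax); (d1_f1, Ax); (d1_f2, Det 0 1); (d1_f3, Ax); (d1_f4, Det 2 3)].
Lemma d1_ok : valid_proof d1_p /\ dn_free d1_p.
Proof.
 split.
 - intros k e H.
   destruct k as [|k]; [injection H as <-; exists (fun j => j), L1; split; [apply renaming_id|]; split; [tauto|]; reflexivity|].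
   destruct k as [|k]; [injection H as <-; exists (fun j => j), L3; split; [apply renaming_id|]; split; [tauto|]; reflexivity|].
   destruct k as [|k]; [injection H as <-; simpl; split; [lia|split; [lia|]]; exists (d1_f0, Ax), (d1_f1, Ax); split; [reflexivity|split; [reflexivity|exact d1_s2]]|].
   destruct k as [|k]; [injection H as <-; exists (fun j => j), L2; split; [apply renaming_id|]; split; [tauto|]; reflexivity|].
   destruct k as [|k]; [injection H as <-; simpl; split; [lia|split; [lia|]]; exists (d1_f2, Det 0 1), (d1_f3, Ax); split; [reflexivity|split; [reflexivity|exact d1_s4]]|].
   destruct k; discriminate H.
 - intros k e H Hj.
   destruct k as [|k]; [injection H as <-; simpl in Hj; congruence|].
   destruct k as [|k]; [injection H as <-; simpl in Hj; congruence|].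
   destruct k as [|k]; [injection H as <-; unfold d1_f2; simpl; tauto|].
   destruct k as [|k]; [injection H as <-; simpl in Hj; congruence|].
   destruct k as [|k]; [injection H as <-; unfold d1_f4; simpl; tauto|].
   destruct k; discriminate H.
Qed.
Lemma d1_concl : concludes d1_p d1_f4.
Proof. eexists; reflexivity. Qed.

Definition d2_f0 := (I (I (V 0) (V 1)) (I (I (V 1) (V 2)) (I (V 0) (V 2)))).
Definition d2_f1 := (I (I (N (V 0)) (V 0)) (V 0)).
Definition d2_f2 := (I (I (V 0) (V 1)) (I (I (N (V 0)) (V 0)) (V 1))).
Definition d2_f3 := (I (V 0) (I (N (V 0)) (V 1))).
Definition d2_f4 := (I (I (I (N (V 0)) (V 1)) (V 2)) (I (V 0) (V 2))).
Definition d2_f5 := (I (V 0) (V 0)).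
Definition d2_f6 := (I (I (V 0) (V 1)) (I (V 0) (V 1))).
Definition d2_f7 := (I (I (N (I (V 0) (V 1))) (I (V 0) (V 1))) (I (V 0) (V 1))).
Definition d2_f8 := (I (N (I (V 0) (V 0))) (V 1)).
Definition d2_f9 := (I (I (V 0) (V 1)) (I (N (I (V 2) (V 2))) (V 1))).
Definition d2_f10 := (I (N (I (V 0) (V 0))) (I (I (N (V 1)) (V 1)) (V 2))).
Definition d2_f11 := (I (I (N (V 0)) (V 0)) (I (N (V 0)) (V 0))).
Definition d2_f12 := (I (V 0) (I (N (V 0)) (V 0))).
Definition d2_f13 := (I (I (I (N (V 0)) (V 0)) (V 1)) (I (V 0) (V 1))).
Definition d2_f14 := (I (V 0) (I (N (I (V 1) (V 1))) (V 0))).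
Definition d2_f15 := (I (V 0) (I (N (I (V 1) (V 1))) (V 2))).
Definition d2_f16 := (I (I (I (N (I (V 0) (V 0))) (V 1)) (V 2)) (I (V 3) (V 2))).
Definition d2_f17 := (I (V 0) (I (V 1) (V 1))).
Definition d2_f18 := (I (N (I (V 0) (V 0))) (I (V 1) (I (V 2) (V 2)))).
Definition d2_f19 := (I (I (V 0) (V 0)) (I (V 0) (V 0))).
Definition d2_f20 := (I (I (I (V 0) (V 0)) (V 1)) (I (V 2) (V 1))).
Definition d2_f21 := (I (V 0) (I (V 1) (I (N (V 1)) (V 2)))).
Definition d2_f22 := (I (I (V 0) (I (N (V 0)) (V 1))) (I (V 0) (I (N (V 0)) (V 1)))).
Definition d2_f23 := (I (I (I (V 0) (I (N (V 0)) (V 1))) (V 2)) (I (V 3) (V 2))).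
Definition d2_f24 := (I (I (I (V 0) (V 1)) (V 2)) (I (I (I (V 3) (V 3)) (V 1)) (V 2))).
Definition d2_f25 := (I (I (I (V 0) (V 0)) (I (V 1) (V 2))) (I (V 1) (V 2))).
Definition d2_f26 := (I (I (I (V 0) (V 0)) (V 1)) (I (I (V 0) (V 0)) (V 1))).
Definition d2_f27 := (I (I (V 0) (V 0)) (I (N (I (V 1) (V 1))) (V 0))).
Definition d2_f28 := (I (I (V 0) (V 0)) (I (N (I (V 0) (V 0))) (V 0))).
Definition d2_f29 := (I (N (I (V 0) (V 0))) (V 0)).
Definition d2_f30 := (I (I (V 0) (V 1)) (I (N (I (V 0) (V 0))) (V 1))).
Definition d2_f31 := (I (V 0) (I (N (I (V 1) (V 1))) (I (N (V 1)) (V 2)))).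
Definition d2_f32 := (I (I (V 0) (V 0)) (I (N (I (V 0) (V 0))) (I (N (V 0)) (V 1)))).
Definition d2_f33 := (I (I (I (N (I (V 0) (V 0))) (I (N (V 0)) (V 1))) (V 2)) (I (I (V 0) (V 0)) (V 2))).
Definition d2_f34 := (I (I (I (N (I (V 0) (V 0))) (V 1)) (V 2)) (I (I (V 3) (V 1)) (V 2))).
Definition d2_f35 := (I (I (N (I (V 0) (V 0))) (I (V 0) (V 0))) (I (V 0) (V 0))).
Definition d2_f36 := (I (I (V 0) (I (V 1) (V 1))) (I (V 1) (V 1))).
Definition d2_f37 := (I (I (V 0) (V 0)) (I (N (V 0)) (N (V 0)))).
Lemma d2_s2 : cd d2_f0 d2_f1 d2_f2.
Proof. unfold d2_f0, d2_f1, d2_f2.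
  solve_cd 3 [(I (N (V 3)) (V 3)); (V 3); (V 2); (V 3)] [2; 3; 1; 0] [3; 2; 0; 1].
Qed.
Lemma d2_s4 : cd d2_f0 d2_f3 d2_f4.
Proof. unfold d2_f0, d2_f3, d2_f4.
  solve_cd 3 [(V 3); (I (N (V 3)) (V 4)); (V 2); (V 3); (V 4)] [3; 4; 2; 0; 1] [3; 4; 2; 0; 1].
Qed.
Lemma d2_s5 : cd d2_f4 d2_f1 d2_f5.
Proof. unfold d2_f4, d2_f1, d2_f5.
  solve_cd 3 [(V 3); (V 3); (V 3); (V 3)] [1; 2; 3; 0] [3; 0; 1; 2].
Qed.
Lemma d2_s6 : cd d2_f0 d2_f5 d2_f6.
Proof. unfold d2_f0, d2_f5, d2_f6.
  solve_cd 3 [(V 3); (V 3); (V 2); (V 3)] [2; 3; 1; 0] [3; 2; 0; 1].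
Qed.
Lemma d2_s7 : cd d2_f2 d2_f6 d2_f7.
Proof. unfold d2_f2, d2_f6, d2_f7.
  solve_cd 2 [(I (V 2) (V 3)); (I (V 2) (V 3)); (V 2); (V 3)] [2; 3; 0; 1] [2; 3; 0; 1].
Qed.
Lemma d2_s8 : cd d2_f3 d2_f5 d2_f8.
Proof. unfold d2_f3, d2_f5, d2_f8.
  solve_cd 2 [(I (V 2) (V 2)); (V 1); (V 2)] [2; 1; 0] [2; 1; 0].
Qed.
Lemma d2_s9 : cd d2_f0 d2_f8 d2_f9.
Proof. unfold d2_f0, d2_f8, d2_f9.
  solve_cd 3 [(N (I (V 3) (V 3))); (V 4); (V 2); (V 3); (V 4)] [3; 4; 1; 2; 0] [4; 2; 3; 0; 1].
Qed.
Lemma d2_s10 : cd d2_f9 d2_f2 d2_f10.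
Proof. unfold d2_f9, d2_f2, d2_f10.
  solve_cd 3 [(I (V 3) (V 4)); (I (I (N (V 3)) (V 3)) (V 4)); (V 2); (V 3); (V 4)] [3; 4; 0; 1; 2] [2; 3; 4; 0; 1].
Qed.
Lemma d2_s11 : cd d2_f1 d2_f10 d2_f11.
Proof. unfold d2_f1, d2_f10, d2_f11.
  solve_cd 1 [(I (I (N (V 2)) (V 2)) (I (N (V 2)) (V 2))); (I (N (V 2)) (V 2)); (V 2); (I (N (V 2)) (V 2))] [1; 2; 0; 3] [2; 0; 1; 3].
Qed.
Lemma d2_s12 : cd d2_f4 d2_f11 d2_f12.
Proof. unfold d2_f4, d2_f11, d2_f12.
  solve_cd 3 [(V 3); (V 3); (I (N (V 3)) (V 3)); (V 3)] [1; 2; 3; 0] [3; 0; 1; 2].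
Qed.
Lemma d2_s13 : cd d2_f0 d2_f12 d2_f13.
Proof. unfold d2_f0, d2_f12, d2_f13.
  solve_cd 3 [(V 3); (I (N (V 3)) (V 3)); (V 2); (V 3)] [2; 3; 1; 0] [3; 2; 0; 1].
Qed.
Lemma d2_s14 : cd d2_f13 d2_f9 d2_f14.
Proof. unfold d2_f13, d2_f9, d2_f14.
  solve_cd 2 [(V 3); (I (N (I (V 4) (V 4))) (V 3)); (N (V 3)); (V 3); (V 4)] [2; 3; 4; 0; 1] [3; 4; 0; 1; 2].
Qed.
Lemma d2_s15 : cd d2_f4 d2_f9 d2_f15.
Proof. unfold d2_f4, d2_f9, d2_f15.
  solve_cd 3 [(V 0); (V 4); (I (N (I (V 5) (V 5))) (V 4)); (N (V 0)); (V 4); (V 5)] [0; 3; 4; 5; 2; 1] [0; 5; 4; 1; 2; 3].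
Qed.
Lemma d2_s16 : cd d2_f0 d2_f15 d2_f16.
Proof. unfold d2_f0, d2_f15, d2_f16.
  solve_cd 3 [(V 3); (I (N (I (V 4) (V 4))) (V 5)); (V 2); (V 3); (V 4); (V 5)] [4; 5; 2; 3; 0; 1] [4; 5; 2; 3; 0; 1].
Qed.
Lemma d2_s17 : cd d2_f16 d2_f7 d2_f17.
Proof. unfold d2_f16, d2_f7, d2_f17.
  solve_cd 4 [(V 5); (I (V 5) (V 5)); (I (V 5) (V 5)); (V 3); (V 5); (V 5)] [2; 3; 4; 0; 5; 1] [3; 5; 0; 1; 2; 4].
Qed.
Lemma d2_s18 : cd d2_f14 d2_f17 d2_f18.
Proof. unfold d2_f14, d2_f17, d2_f18.
  solve_cd 2 [(I (V 2) (I (V 3) (V 3))); (V 1); (V 2); (V 3)] [3; 0; 1; 2] [1; 2; 3; 0].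
Qed.
Lemma d2_s19 : cd d2_f7 d2_f18 d2_f19.
Proof. unfold d2_f7, d2_f18, d2_f19.
  solve_cd 2 [(I (V 4) (V 4)); (I (V 4) (V 4)); (I (V 4) (V 4)); (I (V 4) (V 4)); (V 4)] [1; 2; 3; 4; 0] [4; 0; 1; 2; 3].
Qed.
Lemma d2_s20 : cd d2_f0 d2_f17 d2_f20.
Proof. unfold d2_f0, d2_f17, d2_f20.
  solve_cd 3 [(V 3); (I (V 4) (V 4)); (V 2); (V 3); (V 4)] [3; 4; 1; 2; 0] [4; 2; 3; 0; 1].
Qed.
Lemma d2_s21 : cd d2_f20 d2_f4 d2_f21.
Proof. unfold d2_f20, d2_f4, d2_f21.
  solve_cd 3 [(I (N (V 3)) (V 4)); (I (V 3) (I (N (V 3)) (V 4))); (V 2); (V 3); (V 4); (I (N (V 3)) (V 4))] [3; 4; 0; 1; 2; 5] [2; 3; 4; 0; 1; 5].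
Qed.
Lemma d2_s22 : cd d2_f19 d2_f21 d2_f22.
Proof. unfold d2_f19, d2_f21, d2_f22.
  solve_cd 1 [(I (V 2) (I (N (V 2)) (V 3))); (I (V 2) (I (N (V 2)) (V 3))); (V 2); (V 3)] [2; 3; 0; 1] [2; 3; 0; 1].
Qed.
Lemma d2_s23 : cd d2_f0 d2_f21 d2_f23.
Proof. unfold d2_f0, d2_f21, d2_f23.
  solve_cd 3 [(V 3); (I (V 4) (I (N (V 4)) (V 5))); (V 2); (V 3); (V 4); (V 5)] [4; 5; 2; 3; 0; 1] [4; 5; 2; 3; 0; 1].
Qed.
Lemma d2_s24 : cd d2_f0 d2_f20 d2_f24.
Proof. unfold d2_f0, d2_f20, d2_f24.
  solve_cd 3 [(I (I (V 3) (V 3)) (V 4)); (I (V 5) (V 4)); (V 2); (V 3); (V 4); (V 5)] [4; 5; 2; 3; 1; 0] [5; 4; 2; 3; 0; 1].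
Qed.
Lemma d2_s25 : cd d2_f24 d2_f7 d2_f25.
Proof. unfold d2_f24, d2_f7, d2_f25.
  solve_cd 4 [(N (I (V 4) (V 5))); (I (V 4) (V 5)); (I (V 4) (V 5)); (V 3); (V 4); (V 5)] [3; 4; 5; 0; 1; 2] [3; 4; 5; 0; 1; 2].
Qed.
Lemma d2_s26 : cd d2_f19 d2_f20 d2_f26.
Proof. unfold d2_f19, d2_f20, d2_f26.
  solve_cd 1 [(I (I (V 1) (V 1)) (V 2)); (V 1); (V 2); (I (V 1) (V 1))] [2; 0; 1; 3] [1; 2; 0; 3].
Qed.
Lemma d2_s27 : cd d2_f26 d2_f9 d2_f27.
Proof. unfold d2_f26, d2_f9, d2_f27.
  solve_cd 2 [(V 3); (I (N (I (V 4) (V 4))) (V 3)); (V 3); (V 3); (V 4)] [2; 3; 4; 0; 1] [3; 4; 0; 1; 2].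
Qed.
Lemma d2_s28 : cd d2_f22 d2_f27 d2_f28.
Proof. unfold d2_f22, d2_f27, d2_f28.
  solve_cd 2 [(I (V 3) (V 3)); (V 3); (V 3); (V 3)] [1; 2; 3; 0] [3; 0; 1; 2].
Qed.
Lemma d2_s29 : cd d2_f25 d2_f28 d2_f29.
Proof. unfold d2_f25, d2_f28, d2_f29.
  solve_cd 3 [(V 3); (N (I (V 3) (V 3))); (V 3); (V 3)] [1; 2; 3; 0] [3; 0; 1; 2].
Qed.
Lemma d2_s30 : cd d2_f0 d2_f29 d2_f30.
Proof. unfold d2_f0, d2_f29, d2_f30.
  solve_cd 3 [(N (I (V 3) (V 3))); (V 3); (V 2); (V 3)] [2; 3; 1; 0] [3; 2; 0; 1].
Qed.
Lemma d2_s31 : cd d2_f23 d2_f30 d2_f31.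
Proof. unfold d2_f23, d2_f30, d2_f31.
  solve_cd 4 [(V 4); (V 1); (I (N (I (V 4) (V 4))) (I (N (V 4)) (V 1))); (V 3); (V 4); (I (N (V 4)) (V 1))] [3; 2; 4; 0; 1; 5] [3; 4; 1; 0; 2; 5].
Qed.
Lemma d2_s32 : cd d2_f22 d2_f31 d2_f32.
Proof. unfold d2_f22, d2_f31, d2_f32.
  solve_cd 2 [(I (V 3) (V 3)); (I (N (V 3)) (V 4)); (I (V 3) (V 3)); (V 3); (V 4)] [2; 3; 4; 0; 1] [3; 4; 0; 1; 2].
Qed.
Lemma d2_s33 : cd d2_f0 d2_f32 d2_f33.
Proof. unfold d2_f0, d2_f32, d2_f33.
  solve_cd 3 [(I (V 3) (V 3)); (I (N (I (V 3) (V 3))) (I (N (V 3)) (V 4))); (V 2); (V 3); (V 4)] [3; 4; 2; 0; 1] [3; 4; 2; 0; 1].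
Qed.
Lemma d2_s34 : cd d2_f0 d2_f9 d2_f34.
Proof. unfold d2_f0, d2_f9, d2_f34.
  solve_cd 3 [(I (V 3) (V 4)); (I (N (I (V 5) (V 5))) (V 4)); (V 2); (V 3); (V 4); (V 5)] [4; 5; 2; 3; 1; 0] [5; 4; 2; 3; 0; 1].
Qed.
Lemma d2_s35 : cd d2_f2 d2_f19 d2_f35.
Proof. unfold d2_f2, d2_f19, d2_f35.
  solve_cd 2 [(I (V 2) (V 2)); (I (V 2) (V 2)); (V 2)] [1; 2; 0] [2; 0; 1].
Qed.
Lemma d2_s36 : cd d2_f34 d2_f35 d2_f36.
Proof. unfold d2_f34, d2_f35, d2_f36.
  solve_cd 4 [(V 4); (I (V 4) (V 4)); (I (V 4) (V 4)); (V 3); (V 4)] [2; 3; 4; 0; 1] [3; 4; 0; 1; 2].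
Qed.
Lemma d2_s37 : cd d2_f33 d2_f36 d2_f37.
Proof. unfold d2_f33, d2_f36, d2_f37.
  solve_cd 3 [(V 0); (N (V 0)); (I (N (V 0)) (N (V 0))); (N (I (V 0) (V 0))); (N (V 0))] [0; 1; 2; 3; 4] [0; 1; 2; 3; 4].
Qed.
Definition d2_p : proof := [(d2_f0, Ax); (d2_f1, Ax); (d2_f2, Det 0 1); (d2_f3, Ax); (d2_f4, Det 0 3); (d2_f5, Det 4 1); (d2_f6, Det 0 5); (d2_f7, Det 2 6); (d2_f8, Det 3 5); (d2_f9, Det 0 8); (d2_f10, Det 9 2); (d2_f11, Det 1 10); (d2_f12, Det 4 11); (d2_f13, Det 0 12); (d2_f14, Det 13 9); (d2_f15, Det 4 9); (d2_f16, Det 0 15); (d2_f17, Det 16 7); (d2_f18, Det 14 17); (d2_f19, Det 7 18); (d2_f20, Det 0 17); (d2_f21, Det 20 4); (d2_f22, Det 19 21); (d2_f23, Det 0 21); (d2_f24, Det 0 20); (d2_f25, Det 24 7); (d2_f26, Det 19 20); (d2_f27, Det 26 9); (d2_f28, Det 22 27); (d2_f29, Det 25 28); (d2_f30, Det 0 29); (d2_f31, Det 23 30); (d2_f32, Det 22 31); (d2_f33, Det 0 32); (d2_f34, Det 0 9); (d2_f35, Det 2 19); (d2_f36, Det 34 35); (d2_f37, Det 33 36)].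
Lemma d2_ok : valid_proof d2_p /\ dn_free d2_p.
Proof.
 split.
 - intros k e H.
   destruct k as [|k]; [injection H as <-; exists (fun j => j), L1; split; [apply renaming_id|]; split; [tauto|]; reflexivity|].
   destruct k as [|k]; [injection H as <-; exists (fun j => j), L2; split; [apply renaming_id|]; split; [tauto|]; reflexivity|].
   destruct k as [|k]; [injection H as <-; simpl; split; [lia|split; [lia|]]; exists (d2_f0, Ax), (d2_f1, Ax); split; [reflexivity|split; [reflexivity|exact d2_s2]]|].
   destruct k as [|k]; [injection H as <-; exists (fun j => j), L3; split; [apply renaming_id|]; split; [tauto|]; reflexivity|].
   destruct k as [|k]; [injection H as <-; simpl; split; [lia|split; [lia|]]; exists (d2_f0, Ax), (d2_f3, Ax); split; [reflexivity|split; [reflexivity|exact d2_s4]]|].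
   destruct k as [|k]; [injection H as <-; simpl; split; [lia|split; [lia|]]; exists (d2_f4, Det 0 3), (d2_f1, Ax); split; [reflexivity|split; [reflexivity|exact d2_s5]]|].
   destruct k as [|k]; [injection H as <-; simpl; split; [lia|split; [lia|]]; exists (d2_f0, Ax), (d2_f5, Det 4 1); split; [reflexivity|split; [reflexivity|exact d2_s6]]|].
   destruct k as [|k]; [injection H as <-; simpl; split; [lia|split; [lia|]]; exists (d2_f2, Det 0 1), (d2_f6, Det 0 5); split; [reflexivity|split; [reflexivity|exact d2_s7]]|].
   destruct k as [|k]; [injection H as <-; simpl; split; [lia|split; [lia|]]; exists (d2_f3, Ax), (d2_f5, Det 4 1); split; [reflexivity|split; [reflexivity|exact d2_s8]]|].
   destruct k as [|k]; [injection H as <-; simpl; split; [lia|split; [lia|]]; exists (d2_f0, Ax), (d2_f8, Det 3 5); split; [reflexivity|split; [reflexivity|exact d2_s9]]|].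
   destruct k as [|k]; [injection H as <-; simpl; split; [lia|split; [lia|]]; exists (d2_f9, Det 0 8), (d2_f2, Det 0 1); split; [reflexivity|split; [reflexivity|exact d2_s10]]|].
   destruct k as [|k]; [injection H as <-; simpl; split; [lia|split; [lia|]]; exists (d2_f1, Ax), (d2_f10, Det 9 2); split; [reflexivity|split; [reflexivity|exact d2_s11]]|].
   destruct k as [|k]; [injection H as <-; simpl; split; [lia|split; [lia|]]; exists (d2_f4, Det 0 3), (d2_f11, Det 1 10); split; [reflexivity|split; [reflexivity|exact d2_s12]]|].
   destruct k as [|k]; [injection H as <-; simpl; split; [lia|split; [lia|]]; exists (d2_f0, Ax), (d2_f12, Det 4 11); split; [reflexivity|split; [reflexivity|exact d2_s13]]|].
   destruct k as [|k]; [injection H as <-; simpl; split; [lia|split; [lia|]]; exists (d2_f13, Det 0 12), (d2_f9, Det 0 8); split; [reflexivity|split; [reflexivity|exact d2_s14]]|].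
   destruct k as [|k]; [injection H as <-; simpl; split; [lia|split; [lia|]]; exists (d2_f4, Det 0 3), (d2_f9, Det 0 8); split; [reflexivity|split; [reflexivity|exact d2_s15]]|].
   destruct k as [|k]; [injection H as <-; simpl; split; [lia|split; [lia|]]; exists (d2_f0, Ax), (d2_f15, Det 4 9); split; [reflexivity|split; [reflexivity|exact d2_s16]]|].
   destruct k as [|k]; [injection H as <-; simpl; split; [lia|split; [lia|]]; exists (d2_f16, Det 0 15), (d2_f7, Det 2 6); split; [reflexivity|split; [reflexivity|exact d2_s17]]|].
   destruct k as [|k]; [injection H as <-; simpl; split; [lia|split; [lia|]]; exists (d2_f14, Det 13 9), (d2_f17, Det 16 7); split; [reflexivity|split; [reflexivity|exact d2_s18]]|].
   destruct k as [|k]; [injection H as <-; simpl; split; [lia|split; [lia|]]; exists (d2_f7, Det 2 6), (d2_f18, Det 14 17); split; [reflexivity|split; [reflexivity|exact d2_s19]]|].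
   destruct k as [|k]; [injection H as <-; simpl; split; [lia|split; [lia|]]; exists (d2_f0, Ax), (d2_f17, Det 16 7); split; [reflexivity|split; [reflexivity|exact d2_s20]]|].
   destruct k as [|k]; [injection H as <-; simpl; split; [lia|split; [lia|]]; exists (d2_f20, Det 0 17), (d2_f4, Det 0 3); split; [reflexivity|split; [reflexivity|exact d2_s21]]|].
   destruct k as [|k]; [injection H as <-; simpl; split; [lia|split; [lia|]]; exists (d2_f19, Det 7 18), (d2_f21, Det 20 4); split; [reflexivity|split; [reflexivity|exact d2_s22]]|].
   destruct k as [|k]; [injection H as <-; simpl; split; [lia|split; [lia|]]; exists (d2_f0, Ax), (d2_f21, Det 20 4); split; [reflexivity|split; [reflexivity|exact d2_s23]]|].
   destruct k as [|k]; [injection H as <-; simpl; split; [lia|split; [lia|]]; exists (d2_f0, Ax), (d2_f20, Det 0 17); split; [reflexivity|split; [reflexivity|exact d2_s24]]|].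
   destruct k as [|k]; [injection H as <-; simpl; split; [lia|split; [lia|]]; exists (d2_f24, Det 0 20), (d2_f7, Det 2 6); split; [reflexivity|split; [reflexivity|exact d2_s25]]|].
   destruct k as [|k]; [injection H as <-; simpl; split; [lia|split; [lia|]]; exists (d2_f19, Det 7 18), (d2_f20, Det 0 17); split; [reflexivity|split; [reflexivity|exact d2_s26]]|].
   destruct k as [|k]; [injection H as <-; simpl; split; [lia|split; [lia|]]; exists (d2_f26, Det 19 20), (d2_f9, Det 0 8); split; [reflexivity|split; [reflexivity|exact d2_s27]]|].
   destruct k as [|k]; [injection H as <-; simpl; split; [lia|split; [lia|]]; exists (d2_f22, Det 19 21), (d2_f27, Det 26 9); split; [reflexivity|split; [reflexivity|exact d2_s28]]|].
   destruct k as [|k]; [injection H as <-; simpl; split; [lia|split; [lia|]]; exists (d2_f25, Det 24 7), (d2_f28, Det 22 27); split; [reflexivity|split; [reflexivity|exact d2_s29]]|].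
   destruct k as [|k]; [injection H as <-; simpl; split; [lia|split; [lia|]]; exists (d2_f0, Ax), (d2_f29, Det 25 28); split; [reflexivity|split; [reflexivity|exact d2_s30]]|].
   destruct k as [|k]; [injection H as <-; simpl; split; [lia|split; [lia|]]; exists (d2_f23, Det 0 21), (d2_f30, Det 0 29); split; [reflexivity|split; [reflexivity|exact d2_s31]]|].
   destruct k as [|k]; [injection H as <-; simpl; split; [lia|split; [lia|]]; exists (d2_f22, Det 19 21), (d2_f31, Det 23 30); split; [reflexivity|split; [reflexivity|exact d2_s32]]|].
   destruct k as [|k]; [injection H as <-; simpl; split; [lia|split; [lia|]]; exists (d2_f0, Ax), (d2_f32, Det 22 31); split; [reflexivity|split; [reflexivity|exact d2_s33]]|].
   destruct k as [|k]; [injection H as <-; simpl; split; [lia|split; [lia|]]; exists (d2_f0, Ax), (d2_f9, Det 0 8); split; [reflexivity|split; [reflexivity|exact d2_s34]]|].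
   destruct k as [|k]; [injection H as <-; simpl; split; [lia|split; [lia|]]; exists (d2_f2, Det 0 1), (d2_f19, Det 7 18); split; [reflexivity|split; [reflexivity|exact d2_s35]]|].
   destruct k as [|k]; [injection H as <-; simpl; split; [lia|split; [lia|]]; exists (d2_f34, Det 0 9), (d2_f35, Det 2 19); split; [reflexivity|split; [reflexivity|exact d2_s36]]|].
   destruct k as [|k]; [injection H as <-; simpl; split; [lia|split; [lia|]]; exists (d2_f33, Det 0 32), (d2_f36, Det 34 35); split; [reflexivity|split; [reflexivity|exact d2_s37]]|].
   destruct k; discriminate H.
 - intros k e H Hj.
   destruct k as [|k]; [injection H as <-; simpl in Hj; congruence|].
   destruct k as [|k]; [injection H as <-; simpl in Hj; congruence|].
   destruct k as [|k]; [injection H as <-; unfold d2_f2; simpl; tauto|].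
   destruct k as [|k]; [injection H as <-; simpl in Hj; congruence|].
   destruct k as [|k]; [injection H as <-; unfold d2_f4; simpl; tauto|].
   destruct k as [|k]; [injection H as <-; unfold d2_f5; simpl; tauto|].
   destruct k as [|k]; [injection H as <-; unfold d2_f6; simpl; tauto|].
   destruct k as [|k]; [injection H as <-; unfold d2_f7; simpl; tauto|].
   destruct k as [|k]; [injection H as <-; unfold d2_f8; simpl; tauto|].
   destruct k as [|k]; [injection H as <-; unfold d2_f9; simpl; tauto|].
   destruct k as [|k]; [injection H as <-; unfold d2_f10; simpl; tauto|].
   destruct k as [|k]; [injection H as <-; unfold d2_f11; simpl; tauto|].
   destruct k as [|k]; [injection H as <-; unfold d2_f12; simpl; tauto|].
   destruct k as [|k]; [injection H as <-; unfold d2_f13; simpl; tauto|].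
   destruct k as [|k]; [injection H as <-; unfold d2_f14; simpl; tauto|].
   destruct k as [|k]; [injection H as <-; unfold d2_f15; simpl; tauto|].
   destruct k as [|k]; [injection H as <-; unfold d2_f16; simpl; tauto|].
   destruct k as [|k]; [injection H as <-; unfold d2_f17; simpl; tauto|].
   destruct k as [|k]; [injection H as <-; unfold d2_f18; simpl; tauto|].
   destruct k as [|k]; [injection H as <-; unfold d2_f19; simpl; tauto|].
   destruct k as [|k]; [injection H as <-; unfold d2_f20; simpl; tauto|].
   destruct k as [|k]; [injection H as <-; unfold d2_f21; simpl; tauto|].
   destruct k as [|k]; [injection H as <-; unfold d2_f22; simpl; tauto|].
   destruct k as [|k]; [injection H as <-; unfold d2_f23; simpl; tauto|].
   destruct k as [|k]; [injection H as <-; unfold d2_f24; simpl; tauto|].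
   destruct k as [|k]; [injection H as <-; unfold d2_f25; simpl; tauto|].
   destruct k as [|k]; [injection H as <-; unfold d2_f26; simpl; tauto|].
   destruct k as [|k]; [injection H as <-; unfold d2_f27; simpl; tauto|].
   destruct k as [|k]; [injection H as <-; unfold d2_f28; simpl; tauto|].
   destruct k as [|k]; [injection H as <-; unfold d2_f29; simpl; tauto|].
   destruct k as [|k]; [injection H as <-; unfold d2_f30; simpl; tauto|].
   destruct k as [|k]; [injection H as <-; unfold d2_f31; simpl; tauto|].
   destruct k as [|k]; [injection H as <-; unfold d2_f32; simpl; tauto|].
   destruct k as [|k]; [injection H as <-; unfold d2_f33; simpl; tauto|].
   destruct k as [|k]; [injection H as <-; unfold d2_f34; simpl; tauto|].
   destruct k as [|k]; [injection H as <-; unfold d2_f35; simpl; tauto|].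
   destruct k as [|k]; [injection H as <-; unfold d2_f36; simpl; tauto|].
   destruct k as [|k]; [injection H as <-; unfold d2_f37; simpl; tauto|].
   destruct k; discriminate H.
Qed.
Lemma d2_concl : concludes d2_p d2_f37.
Proof. eexists; reflexivity. Qed.

Definition d3_f0 := (I (I (V 0) (V 1)) (I (I (V 1) (V 2)) (I (V 0) (V 2)))).
Definition d3_f1 := (I (I (I (I (V 0) (V 1)) (I (V 2) (V 1))) (V 3)) (I (I (V 2) (V 0)) (V 3))).
Definition d3_f2 := (I (I (V 0) (I (V 1) (V 2))) (I (I (V 3) (V 1)) (I (V 0) (I (V 3) (V 2))))).
Definition d3_f3 := (I (V 0) (I (N (V 0)) (V 1))).
Definition d3_f4 := (I (I (I (N (V 0)) (V 1)) (V 2)) (I (V 0) (V 2))).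
Definition d3_f5 := (I (I (N (V 0)) (V 0)) (V 0)).
Definition d3_f6 := (I (V 0) (V 0)).
Definition d3_f7 := (I (I (V 0) (V 1)) (I (V 0) (V 1))).
Definition d3_f8 := (I (I (I (V 0) (V 1)) (V 2)) (I (I (V 0) (V 1)) (V 2))).
Definition d3_f9 := (I (I (I (I (V 0) (V 1)) (V 2)) (V 3)) (I (I (I (V 0) (V 1)) (V 2)) (V 3))).
Definition d3_f10 := (I (I (V 0) (I (V 1) (V 2))) (I (I (I (V 1) (V 2)) (V 3)) (I (V 0) (V 3)))).
Definition d3_f11 := (I (N (I (V 0) (V 0))) (V 1)).
Definition d3_f12 := (I (I (V 0) (V 1)) (I (N (I (V 2) (V 2))) (V 1))).
Definition d3_f13 := (I (V 0) (I (N (I (V 1) (V 1))) (V 2))).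
Definition d3_f14 := (I (I (I (N (I (V 0) (V 0))) (V 1)) (V 2)) (I (V 3) (V 2))).
Definition d3_f15 := (I (I (V 0) (V 1)) (I (I (N (V 0)) (V 0)) (V 1))).
Definition d3_f16 := (I (I (N (I (V 0) (V 1))) (I (V 0) (V 1))) (I (V 0) (V 1))).
Definition d3_f17 := (I (V 0) (I (V 1) (V 1))).
Definition d3_f18 := (I (I (V 0) (V 1)) (I (V 2) (I (V 0) (V 1)))).
Definition d3_f19 := (I (I (V 0) (V 1)) (I (I (I (V 0) (V 2)) (V 3)) (I (I (V 1) (V 2)) (V 3)))).
Definition d3_f20 := (I (I (I (V 0) (V 1)) (V 2)) (I (I (I (V 3) (V 3)) (V 1)) (V 2))).
Definition d3_f21 := (I (I (I (V 0) (V 0)) (V 1)) (V 1)).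
Definition d3_f22 := (I (V 0) (I (I (I (V 1) (V 1)) (V 2)) (V 2))).
Definition d3_f23 := (I (I (V 0) (I (I (V 1) (V 1)) (V 2))) (I (V 3) (I (V 0) (V 2)))).
Definition d3_f24 := (I (V 0) (I (I (V 1) (I (I (V 2) (V 2)) (V 3))) (I (V 1) (V 3)))).
Definition d3_f25 := (I (I (V 0) (I (I (V 1) (V 1)) (V 2))) (I (V 0) (V 2))).
Definition d3_f26 := (I (I (I (V 0) (V 0)) (V 1)) (I (V 2) (V 1))).
Definition d3_f27 := (I (V 0) (I (I (V 1) (V 2)) (I (V 1) (V 2)))).
Definition d3_f28 := (I (I (V 0) (I (V 1) (V 2))) (I (V 3) (I (V 0) (I (V 1) (V 2))))).
Definition d3_f29 := (I (I (V 0) (I (V 1) (V 2))) (I (V 0) (I (V 1) (V 2)))).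
Definition d3_f30 := (I (I (I (V 0) (V 1)) (V 2)) (I (I (V 2) (V 3)) (I (I (V 0) (V 1)) (V 3)))).
Definition d3_f31 := (I (I (I (V 0) (I (V 1) (V 2))) (V 3)) (I (I (V 1) (V 2)) (V 3))).
Definition d3_f32 := (I (V 0) (I (I (I (V 1) (I (V 2) (V 2))) (V 3)) (V 3))).
Definition d3_f33 := (I (I (I (V 0) (I (V 1) (V 1))) (V 2)) (V 2)).
Definition d3_f34 := (I (I (I (V 0) (I (V 1) (V 1))) (I (V 2) (V 3))) (I (V 2) (V 3))).
Definition d3_f35 := (I (N (I (V 0) (V 0))) (I (V 1) (V 2))).
Definition d3_f36 := (I (I (I (V 0) (V 1)) (V 2)) (I (N (I (V 3) (V 3))) (V 2))).
Definition d3_f37 := (I (V 0) (I (V 1) (I (V 2) (V 2)))).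
Definition d3_f38 := (I (N (I (V 0) (V 0))) (I (V 1) (I (V 2) (V 2)))).
Definition d3_f39 := (I (I (V 0) (V 0)) (I (V 0) (V 0))).
Definition d3_f40 := (I (I (I (V 0) (V 0)) (V 1)) (I (I (V 1) (V 2)) (V 2))).
Definition d3_f41 := (I (I (I (V 0) (V 0)) (V 0)) (I (I (V 0) (V 0)) (V 0))).
Definition d3_f42 := (I (I (I (V 0) (V 0)) (V 0)) (V 0)).
Definition d3_f43 := (I (V 0) (I (V 1) (I (V 2) (I (V 3) (V 3))))).
Definition d3_f44 := (I (I (V 0) (V 1)) (I (V 2) (I (V 0) (I (V 3) (I (V 4) (V 4)))))).
Definition d3_f45 := (I (I (V 0) (V 1)) (I (V 0) (I (V 2) (I (V 3) (V 3))))).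
Definition d3_f46 := (I (I (V 0) (V 1)) (I (V 2) (I (V 3) (V 3)))).
Definition d3_f47 := (I (I (V 0) (V 1)) (I (I (V 2) (V 3)) (I (V 0) (I (V 4) (V 4))))).
Definition d3_f48 := (I (V 0) (I (I (V 1) (V 2)) (I (V 1) (I (V 3) (V 3))))).
Definition d3_f49 := (I (I (V 0) (V 1)) (I (V 0) (I (V 2) (V 2)))).
Definition d3_f50 := (I (I (V 0) (V 1)) (I (I (V 1) (V 2)) (I (V 3) (V 3)))).
Definition d3_f51 := (I (I (I (I (V 0) (V 1)) (V 1)) (V 2)) (I (V 3) (V 3))).
Definition d3_f52 := (I (I (I (I (V 0) (V 1)) (V 1)) (V 2)) (I (V 3) (I (V 4) (V 4)))).
Definition d3_f53 := (I (I (V 0) (I (V 1) (V 1))) (I (V 1) (V 1))).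
Definition d3_f54 := (I (I (V 0) (V 1)) (I (I (V 2) (V 0)) (I (V 3) (I (V 2) (V 1))))).
Definition d3_f55 := (I (I (V 0) (I (V 0) (V 1))) (I (V 0) (I (V 0) (V 1)))).
Definition d3_f56 := (I (V 0) (I (V 0) (V 0))).
Definition d3_f57 := (I (I (I (V 0) (V 0)) (V 1)) (I (V 0) (V 1))).
Definition d3_f58 := (I (I (V 0) (V 1)) (I (I (I (V 0) (V 1)) (V 2)) (I (V 3) (V 2)))).
Definition d3_f59 := (I (I (I (I (I (V 0) (V 0)) (V 1)) (I (V 2) (V 1))) (V 3)) (V 3)).
Definition d3_f60 := (I (I (I (V 0) (V 0)) (V 1)) (I (I (V 0) (V 0)) (V 1))).
Definition d3_f61 := (I (I (V 0) (V 1)) (I (I (I (V 0) (V 1)) (V 2)) (V 2))).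
Definition d3_f62 := (I (I (V 0) (V 0)) (I (I (I (V 0) (V 0)) (V 1)) (V 1))).
Definition d3_f63 := (I (V 0) (I (I (I (V 0) (V 0)) (V 1)) (V 1))).
Definition d3_f64 := (I (I (V 0) (I (I (V 1) (V 1)) (V 2))) (I (V 1) (I (V 0) (V 2)))).
Definition d3_f65 := (I (I (I (I (I (V 0) (I (V 1) (V 1))) (V 2)) (V 2)) (V 3)) (V 3)).
Definition d3_f66 := (I (I (V 0) (I (I (V 1) (I (V 2) (V 2))) (V 3))) (I (V 0) (V 3))).
Definition d3_f67 := (I (I (I (V 0) (I (V 1) (V 1))) (V 2)) (I (I (V 2) (V 3)) (V 3))).
Definition d3_f68 := (I (I (I (V 0) (I (V 0) (V 0))) (V 1)) (V 1)).
Definition d3_f69 := (I (I (V 0) (V 1)) (I (V 0) (I (V 1) (V 1)))).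
Definition d3_f70 := (I (I (I (V 0) (I (V 1) (V 1))) (V 2)) (I (I (V 0) (V 1)) (V 2))).
Definition d3_f71 := (I (I (V 0) (V 1)) (I (V 1) (I (V 0) (V 1)))).
Definition d3_f72 := (I (I (I (V 0) (I (V 1) (V 0))) (V 2)) (I (I (V 1) (V 0)) (V 2))).
Definition d3_f73 := (I (I (V 0) (V 1)) (I (V 0) (V 0))).
Definition d3_f74 := (I (I (I (I (V 0) (V 1)) (I (V 0) (V 0))) (V 2)) (V 2)).
Definition d3_f75 := (I (I (V 0) (I (V 1) (V 2))) (I (V 0) (I (V 1) (V 1)))).
Definition d3_f76 := (I (I (V 0) (V 1)) (I (V 1) (I (V 0) (V 0)))).
Definition d3_f77 := (I (I (V 0) (V 1)) (I (I (V 1) (V 1)) (I (V 0) (V 0)))).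
Definition d3_f78 := (I (V 0) (I (I (V 1) (V 0)) (I (V 1) (V 1)))).
Definition d3_f79 := (I (I (V 0) (I (V 1) (V 2))) (I (V 2) (I (V 0) (I (V 1) (V 1))))).
Definition d3_f80 := (I (I (V 0) (V 1)) (I (I (V 1) (V 2)) (I (V 0) (V 0)))).
Definition d3_f81 := (I (I (V 0) (V 1)) (I (I (I (V 1) (V 1)) (V 2)) (I (V 0) (V 0)))).
Definition d3_f82 := (I (I (V 0) (V 0)) (I (I (V 1) (V 0)) (I (V 1) (V 1)))).
Definition d3_f83 := (I (I (V 0) (V 0)) (I (I (V 1) (V 1)) (I (I (V 0) (V 1)) (I (V 0) (V 1))))).
Lemma d3_s1 : cd d3_f0 d3_f0 d3_f1.
Proof. unfold d3_f0, d3_f0, d3_f1.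
  solve_cd 3 [(I (V 3) (V 4)); (I (I (V 4) (V 5)) (I (V 3) (V 5))); (V 2); (V 3); (V 4); (V 5)] [4; 5; 3; 2; 0; 1] [4; 5; 3; 2; 0; 1].
Qed.
Lemma d3_s2 : cd d3_f1 d3_f1 d3_f2.
Proof. unfold d3_f1, d3_f1, d3_f2.
  solve_cd 4 [(I (V 4) (V 5)); (I (V 6) (V 5)); (V 2); (I (I (V 6) (V 4)) (I (V 2) (I (V 6) (V 5)))); (V 4); (V 5); (V 6); (I (V 2) (I (V 6) (V 5)))] [4; 5; 0; 6; 1; 2; 3; 7] [2; 4; 5; 6; 0; 1; 3; 7].
Qed.
Lemma d3_s4 : cd d3_f0 d3_f3 d3_f4.
Proof. unfold d3_f0, d3_f3, d3_f4.
  solve_cd 3 [(V 3); (I (N (V 3)) (V 4)); (V 2); (V 3); (V 4)] [3; 4; 2; 0; 1] [3; 4; 2; 0; 1].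
Qed.
Lemma d3_s6 : cd d3_f4 d3_f5 d3_f6.
Proof. unfold d3_f4, d3_f5, d3_f6.
  solve_cd 3 [(V 3); (V 3); (V 3); (V 3)] [1; 2; 3; 0] [3; 0; 1; 2].
Qed.
Lemma d3_s7 : cd d3_f0 d3_f6 d3_f7.
Proof. unfold d3_f0, d3_f6, d3_f7.
  solve_cd 3 [(V 3); (V 3); (V 2); (V 3)] [2; 3; 1; 0] [3; 2; 0; 1].
Qed.
Lemma d3_s8 : cd d3_f0 d3_f7 d3_f8.
Proof. unfold d3_f0, d3_f7, d3_f8.
  solve_cd 3 [(I (V 3) (V 4)); (I (V 3) (V 4)); (V 2); (V 3); (V 4)] [3; 4; 2; 0; 1] [3; 4; 2; 0; 1].
Qed.
Lemma d3_s9 : cd d3_f0 d3_f8 d3_f9.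
Proof. unfold d3_f0, d3_f8, d3_f9.
  solve_cd 3 [(I (I (V 3) (V 4)) (V 5)); (I (I (V 3) (V 4)) (V 5)); (V 2); (V 3); (V 4); (V 5)] [4; 5; 3; 0; 1; 2] [3; 4; 5; 2; 0; 1].
Qed.
Lemma d3_s10 : cd d3_f1 d3_f9 d3_f10.
Proof. unfold d3_f1, d3_f9, d3_f10.
  solve_cd 4 [(I (V 4) (V 5)); (V 6); (V 2); (I (I (I (V 4) (V 5)) (V 6)) (I (V 2) (V 6))); (V 4); (V 5); (V 6); (I (V 2) (V 6))] [4; 5; 0; 6; 1; 2; 3; 7] [2; 4; 5; 6; 0; 1; 3; 7].
Qed.
Lemma d3_s11 : cd d3_f3 d3_f6 d3_f11.
Proof. unfold d3_f3, d3_f6, d3_f11.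
  solve_cd 2 [(I (V 2) (V 2)); (V 1); (V 2)] [2; 1; 0] [2; 1; 0].
Qed.
Lemma d3_s12 : cd d3_f0 d3_f11 d3_f12.
Proof. unfold d3_f0, d3_f11, d3_f12.
  solve_cd 3 [(N (I (V 3) (V 3))); (V 4); (V 2); (V 3); (V 4)] [3; 4; 1; 2; 0] [4; 2; 3; 0; 1].
Qed.
Lemma d3_s13 : cd d3_f4 d3_f12 d3_f13.
Proof. unfold d3_f4, d3_f12, d3_f13.
  solve_cd 3 [(V 0); (V 4); (I (N (I (V 5) (V 5))) (V 4)); (N (V 0)); (V 4); (V 5)] [0; 3; 4; 5; 2; 1] [0; 5; 4; 1; 2; 3].
Qed.
Lemma d3_s14 : cd d3_f0 d3_f13 d3_f14.
Proof. unfold d3_f0, d3_f13, d3_f14.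
  solve_cd 3 [(V 3); (I (N (I (V 4) (V 4))) (V 5)); (V 2); (V 3); (V 4); (V 5)] [4; 5; 2; 3; 0; 1] [4; 5; 2; 3; 0; 1].
Qed.
Lemma d3_s15 : cd d3_f0 d3_f5 d3_f15.
Proof. unfold d3_f0, d3_f5, d3_f15.
  solve_cd 3 [(I (N (V 3)) (V 3)); (V 3); (V 2); (V 3)] [2; 3; 1; 0] [3; 2; 0; 1].
Qed.
Lemma d3_s16 : cd d3_f15 d3_f7 d3_f16.
Proof. unfold d3_f15, d3_f7, d3_f16.
  solve_cd 2 [(I (V 2) (V 3)); (I (V 2) (V 3)); (V 2); (V 3)] [2; 3; 0; 1] [2; 3; 0; 1].
Qed.
Lemma d3_s17 : cd d3_f14 d3_f16 d3_f17.
Proof. unfold d3_f14, d3_f16, d3_f17.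
  solve_cd 4 [(V 5); (I (V 5) (V 5)); (I (V 5) (V 5)); (V 3); (V 5); (V 5)] [2; 3; 4; 0; 5; 1] [3; 5; 0; 1; 2; 4].
Qed.
Lemma d3_s18 : cd d3_f2 d3_f17 d3_f18.
Proof. unfold d3_f2, d3_f17, d3_f18.
  solve_cd 4 [(V 4); (V 5); (V 5); (V 3); (V 4); (V 5)] [3; 4; 5; 0; 2; 1] [3; 5; 4; 0; 1; 2].
Qed.
Lemma d3_s19 : cd d3_f1 d3_f0 d3_f19.
Proof. unfold d3_f1, d3_f0, d3_f19.
  solve_cd 4 [(V 0); (V 1); (V 2); (I (I (I (V 2) (V 1)) (V 6)) (I (I (V 0) (V 1)) (V 6))); (I (V 0) (V 1)); (I (V 2) (V 1)); (V 6)] [1; 2; 0; 4; 5; 6; 3] [2; 0; 1; 6; 3; 4; 5].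
Qed.
Lemma d3_s20 : cd d3_f19 d3_f17 d3_f20.
Proof. unfold d3_f19, d3_f17, d3_f20.
  solve_cd 4 [(V 4); (I (V 5) (V 5)); (V 2); (V 3); (V 4); (V 5)] [4; 5; 1; 2; 0; 3] [4; 2; 3; 5; 0; 1].
Qed.
Lemma d3_s21 : cd d3_f20 d3_f5 d3_f21.
Proof. unfold d3_f20, d3_f5, d3_f21.
  solve_cd 4 [(N (V 4)); (V 4); (V 4); (V 3); (V 4)] [2; 3; 4; 0; 1] [3; 4; 0; 1; 2].
Qed.
Lemma d3_s22 : cd d3_f18 d3_f21 d3_f22.
Proof. unfold d3_f18, d3_f21, d3_f22.
  solve_cd 3 [(I (I (V 3) (V 3)) (V 4)); (V 4); (V 2); (V 3); (V 4)] [3; 4; 0; 1; 2] [2; 3; 4; 0; 1].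
Qed.
Lemma d3_s23 : cd d3_f2 d3_f22 d3_f23.
Proof. unfold d3_f2, d3_f22, d3_f23.
  solve_cd 4 [(V 4); (I (I (V 5) (V 5)) (V 6)); (V 6); (V 3); (V 4); (V 5); (V 6)] [4; 5; 6; 0; 3; 1; 2] [3; 5; 6; 4; 0; 1; 2].
Qed.
Lemma d3_s24 : cd d3_f23 d3_f23 d3_f24.
Proof. unfold d3_f23, d3_f23, d3_f24.
  solve_cd 4 [(I (V 4) (I (I (V 5) (V 5)) (V 6))); (V 1); (I (V 4) (V 6)); (V 3); (V 4); (V 5); (V 6); (I (V 1) (V 1))] [4; 5; 6; 0; 1; 2; 3; 7] [3; 4; 5; 6; 0; 1; 2; 7].
Qed.
Lemma d3_s25 : cd d3_f24 d3_f24 d3_f25.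
Proof. unfold d3_f24, d3_f24, d3_f25.
  solve_cd 4 [(I (V 4) (I (I (V 5) (I (I (V 6) (V 6)) (V 7))) (I (V 5) (V 7)))); (V 1); (V 2); (V 3); (V 4); (V 5); (V 6); (V 7)] [3; 0; 1; 2; 4; 5; 6; 7] [1; 2; 3; 0; 4; 5; 6; 7].
Qed.
Lemma d3_s26 : cd d3_f10 d3_f17 d3_f26.
Proof. unfold d3_f10, d3_f17, d3_f26.
  solve_cd 4 [(V 4); (V 5); (V 5); (V 3); (V 4); (V 5)] [3; 4; 5; 1; 2; 0] [5; 3; 4; 0; 1; 2].
Qed.
Lemma d3_s27 : cd d3_f26 d3_f8 d3_f27.
Proof. unfold d3_f26, d3_f8, d3_f27.
  solve_cd 3 [(I (V 3) (V 4)); (I (I (V 3) (V 4)) (I (V 3) (V 4))); (V 2); (V 3); (V 4); (I (V 3) (V 4))] [3; 4; 0; 1; 2; 5] [2; 3; 4; 0; 1; 5].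
Qed.
Lemma d3_s28 : cd d3_f2 d3_f27 d3_f28.
Proof. unfold d3_f2, d3_f27, d3_f28.
  solve_cd 4 [(V 4); (I (V 5) (V 6)); (I (V 5) (V 6)); (V 3); (V 4); (V 5); (V 6)] [4; 5; 6; 0; 3; 1; 2] [3; 5; 6; 4; 0; 1; 2].
Qed.
Lemma d3_s29 : cd d3_f25 d3_f28 d3_f29.
Proof. unfold d3_f25, d3_f28, d3_f29.
  solve_cd 3 [(I (V 3) (I (V 4) (V 5))); (V 1); (I (V 3) (I (V 4) (V 5))); (V 3); (V 4); (V 5); (I (V 1) (V 1))] [3; 4; 5; 0; 1; 2; 6] [3; 4; 5; 0; 1; 2; 6].
Qed.
Lemma d3_s30 : cd d3_f9 d3_f0 d3_f30.
Proof. unfold d3_f9, d3_f0, d3_f30.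
  solve_cd 4 [(V 0); (V 1); (V 5); (I (I (V 5) (V 6)) (I (I (V 0) (V 1)) (V 6))); (I (V 0) (V 1)); (V 5); (V 6)] [0; 1; 4; 5; 6; 2; 3] [0; 1; 5; 6; 2; 3; 4].
Qed.
Lemma d3_s31 : cd d3_f30 d3_f18 d3_f31.
Proof. unfold d3_f30, d3_f18, d3_f31.
  solve_cd 4 [(V 4); (V 5); (I (V 6) (I (V 4) (V 5))); (V 3); (V 4); (V 5); (V 6)] [4; 5; 6; 3; 1; 2; 0] [6; 4; 5; 3; 0; 1; 2].
Qed.
Lemma d3_s32 : cd d3_f23 d3_f31 d3_f32.
Proof. unfold d3_f23, d3_f31, d3_f32.
  solve_cd 4 [(I (I (V 4) (I (V 6) (V 6))) (V 7)); (V 6); (V 7); (V 3); (V 4); (V 6); (V 6); (V 7)] [4; 5; 6; 0; 1; 7; 2; 3] [3; 4; 6; 7; 0; 1; 2; 5].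
Qed.
Lemma d3_s33 : cd d3_f32 d3_f32 d3_f33.
Proof. unfold d3_f32, d3_f32, d3_f33.
  solve_cd 4 [(I (V 4) (I (I (I (V 5) (I (V 6) (V 6))) (V 7)) (V 7))); (V 1); (V 2); (V 3); (V 4); (V 5); (V 6); (V 7)] [3; 0; 1; 2; 4; 5; 6; 7] [1; 2; 3; 0; 4; 5; 6; 7].
Qed.
Lemma d3_s34 : cd d3_f29 d3_f33 d3_f34.
Proof. unfold d3_f29, d3_f33, d3_f34.
  solve_cd 3 [(I (I (V 3) (I (V 4) (V 4))) (I (V 1) (V 2))); (V 1); (V 2); (V 3); (V 4); (I (V 1) (V 2))] [4; 2; 3; 0; 1; 5] [3; 4; 1; 2; 0; 5].
Qed.
Lemma d3_s35 : cd d3_f12 d3_f7 d3_f35.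
Proof. unfold d3_f12, d3_f7, d3_f35.
  solve_cd 3 [(I (V 3) (V 4)); (I (V 3) (V 4)); (V 2); (V 3); (V 4)] [3; 4; 0; 1; 2] [2; 3; 4; 0; 1].
Qed.
Lemma d3_s36 : cd d3_f0 d3_f35 d3_f36.
Proof. unfold d3_f0, d3_f35, d3_f36.
  solve_cd 3 [(N (I (V 3) (V 3))); (I (V 4) (V 5)); (V 2); (V 3); (V 4); (V 5)] [4; 5; 2; 3; 0; 1] [4; 5; 2; 3; 0; 1].
Qed.
Lemma d3_s37 : cd d3_f26 d3_f26 d3_f37.
Proof. unfold d3_f26, d3_f26, d3_f37.
  solve_cd 3 [(I (V 3) (V 3)); (I (V 5) (I (V 3) (V 3))); (V 2); (V 3); (I (V 3) (V 3)); (V 5)] [3; 4; 0; 2; 5; 1] [2; 5; 3; 0; 1; 4].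
Qed.
Lemma d3_s38 : cd d3_f36 d3_f37 d3_f38.
Proof. unfold d3_f36, d3_f37, d3_f38.
  solve_cd 4 [(V 0); (V 1); (I (V 5) (I (V 6) (V 6))); (V 3); (I (V 0) (V 1)); (V 5); (V 6)] [3; 4; 5; 0; 6; 1; 2] [3; 5; 6; 0; 1; 2; 4].
Qed.
Lemma d3_s39 : cd d3_f16 d3_f38 d3_f39.
Proof. unfold d3_f16, d3_f38, d3_f39.
  solve_cd 2 [(I (V 4) (V 4)); (I (V 4) (V 4)); (I (V 4) (V 4)); (I (V 4) (V 4)); (V 4)] [1; 2; 3; 4; 0] [4; 0; 1; 2; 3].
Qed.
Lemma d3_s40 : cd d3_f1 d3_f25 d3_f40.
Proof. unfold d3_f1, d3_f25, d3_f40.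
  solve_cd 4 [(V 0); (V 6); (I (V 5) (V 5)); (I (I (V 0) (V 6)) (V 6)); (I (V 0) (V 6)); (V 5); (V 6)] [1; 3; 4; 5; 6; 0; 2] [5; 0; 6; 1; 2; 3; 4].
Qed.
Lemma d3_s41 : cd d3_f39 d3_f40 d3_f41.
Proof. unfold d3_f39, d3_f40, d3_f41.
  solve_cd 1 [(I (I (V 3) (V 3)) (V 3)); (V 3); (V 3); (V 3)] [1; 2; 3; 0] [3; 0; 1; 2].
Qed.
Lemma d3_s42 : cd d3_f25 d3_f41 d3_f42.
Proof. unfold d3_f25, d3_f41, d3_f42.
  solve_cd 3 [(I (I (V 3) (V 3)) (V 3)); (V 3); (V 3); (V 3)] [1; 2; 3; 0] [3; 0; 1; 2].
Qed.
Lemma d3_s43 : cd d3_f18 d3_f37 d3_f43.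
Proof. unfold d3_f18, d3_f37, d3_f43.
  solve_cd 3 [(V 3); (I (V 4) (I (V 5) (V 5))); (V 2); (V 3); (V 4); (V 5)] [4; 5; 0; 1; 2; 3] [2; 3; 4; 5; 0; 1].
Qed.
Lemma d3_s44 : cd d3_f2 d3_f43 d3_f44.
Proof. unfold d3_f2, d3_f43, d3_f44.
  solve_cd 4 [(V 4); (V 5); (I (V 6) (I (V 7) (V 7))); (V 3); (V 4); (V 5); (V 6); (V 7)] [5; 6; 7; 0; 2; 1; 3; 4] [3; 5; 4; 6; 7; 0; 1; 2].
Qed.
Lemma d3_s45 : cd d3_f25 d3_f44 d3_f45.
Proof. unfold d3_f25, d3_f44, d3_f45.
  solve_cd 3 [(I (V 3) (V 4)); (V 1); (I (V 3) (I (V 6) (I (V 7) (V 7)))); (V 3); (V 4); (I (V 1) (V 1)); (V 6); (V 7)] [4; 5; 6; 0; 1; 7; 2; 3] [3; 4; 6; 7; 0; 1; 2; 5].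
Qed.
Lemma d3_s46 : cd d3_f1 d3_f37 d3_f46.
Proof. unfold d3_f1, d3_f37, d3_f46.
  solve_cd 4 [(V 0); (V 1); (V 2); (I (V 5) (I (V 6) (V 6))); (I (I (V 0) (V 1)) (I (V 2) (V 1))); (V 5); (V 6)] [1; 4; 0; 5; 6; 2; 3] [2; 0; 5; 6; 1; 3; 4].
Qed.
Lemma d3_s47 : cd d3_f2 d3_f46 d3_f47.
Proof. unfold d3_f2, d3_f46, d3_f47.
  solve_cd 4 [(I (V 4) (V 5)); (V 6); (I (V 7) (V 7)); (V 3); (V 4); (V 5); (V 6); (V 7)] [5; 6; 7; 0; 2; 3; 1; 4] [3; 6; 4; 5; 7; 0; 1; 2].
Qed.
Lemma d3_s48 : cd d3_f23 d3_f47 d3_f48.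
Proof. unfold d3_f23, d3_f47, d3_f48.
  solve_cd 4 [(I (V 4) (V 5)); (V 7); (I (V 4) (I (V 8) (V 8))); (V 3); (V 4); (V 5); (V 7); (V 7); (V 8)] [4; 5; 6; 0; 1; 2; 7; 8; 3] [3; 4; 5; 8; 0; 1; 2; 6; 7].
Qed.
Lemma d3_s49 : cd d3_f48 d3_f48 d3_f49.
Proof. unfold d3_f48, d3_f48, d3_f49.
  solve_cd 4 [(I (V 4) (I (I (V 5) (V 6)) (I (V 5) (I (V 7) (V 7))))); (V 1); (V 2); (V 3); (V 4); (V 5); (V 6); (V 7)] [3; 0; 1; 2; 4; 5; 6; 7] [1; 2; 3; 0; 4; 5; 6; 7].
Qed.
Lemma d3_s50 : cd d3_f1 d3_f49 d3_f50.
Proof. unfold d3_f1, d3_f49, d3_f50.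
  solve_cd 4 [(V 0); (V 1); (V 2); (I (I (V 0) (V 1)) (I (V 6) (V 6))); (I (V 0) (V 1)); (I (V 2) (V 1)); (V 6)] [1; 2; 0; 4; 5; 6; 3] [2; 0; 1; 6; 3; 4; 5].
Qed.
Lemma d3_s51 : cd d3_f50 d3_f40 d3_f51.
Proof. unfold d3_f50, d3_f40, d3_f51.
  solve_cd 4 [(I (I (V 4) (V 4)) (V 5)); (I (I (V 5) (V 6)) (V 6)); (V 2); (V 3); (V 4); (V 5); (V 6)] [4; 5; 2; 3; 6; 0; 1] [5; 6; 2; 3; 0; 1; 4].
Qed.
Lemma d3_s52 : cd d3_f45 d3_f51 d3_f52.
Proof. unfold d3_f45, d3_f51, d3_f52.
  solve_cd 4 [(I (I (I (V 4) (V 5)) (V 5)) (V 6)); (I (V 7) (V 7)); (V 2); (V 3); (V 4); (V 5); (V 6); (V 7)] [5; 6; 3; 4; 0; 1; 2; 7] [4; 5; 6; 2; 3; 0; 1; 7].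
Qed.
Lemma d3_s53 : cd d3_f42 d3_f52 d3_f53.
Proof. unfold d3_f42, d3_f52, d3_f53.
  solve_cd 1 [(I (I (V 1) (I (V 5) (V 5))) (I (V 5) (V 5))); (V 1); (I (V 5) (V 5)); (I (I (V 1) (I (V 5) (V 5))) (I (V 5) (V 5))); (I (V 1) (I (V 5) (V 5))); (V 5)] [2; 0; 3; 4; 5; 1] [1; 5; 0; 2; 3; 4].
Qed.
Lemma d3_s54 : cd d3_f31 d3_f2 d3_f54.
Proof. unfold d3_f31, d3_f2, d3_f54.
  solve_cd 4 [(V 4); (V 5); (V 6); (I (I (V 7) (V 5)) (I (V 4) (I (V 7) (V 6)))); (V 4); (V 5); (V 6); (V 7)] [4; 5; 6; 7; 3; 0; 1; 2] [5; 6; 7; 4; 0; 1; 2; 3].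
Qed.
Lemma d3_s55 : cd d3_f53 d3_f54 d3_f55.
Proof. unfold d3_f53, d3_f54, d3_f55.
  solve_cd 2 [(I (I (V 5) (V 3)) (V 3)); (I (V 5) (I (V 5) (V 3))); (I (V 5) (V 3)); (V 3); (V 5); (V 5)] [2; 3; 4; 1; 5; 0] [5; 3; 0; 1; 2; 4].
Qed.
Lemma d3_s56 : cd d3_f34 d3_f55 d3_f56.
Proof. unfold d3_f34, d3_f55, d3_f56.
  solve_cd 4 [(V 5); (V 5); (V 5); (I (V 5) (V 5)); (V 5); (V 5)] [1; 2; 3; 4; 5; 0] [5; 0; 1; 2; 3; 4].
Qed.
Lemma d3_s57 : cd d3_f10 d3_f56 d3_f57.
Proof. unfold d3_f10, d3_f56, d3_f57.
  solve_cd 4 [(V 4); (V 4); (V 4); (V 3); (V 4)] [2; 3; 4; 1; 0] [4; 3; 0; 1; 2].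
Qed.
Lemma d3_s58 : cd d3_f31 d3_f10 d3_f58.
Proof. unfold d3_f31, d3_f10, d3_f58.
  solve_cd 4 [(V 4); (V 5); (V 6); (I (I (I (V 5) (V 6)) (V 7)) (I (V 4) (V 7))); (V 4); (V 5); (V 6); (V 7)] [4; 5; 6; 7; 3; 0; 1; 2] [5; 6; 7; 4; 0; 1; 2; 3].
Qed.
Lemma d3_s59 : cd d3_f40 d3_f58 d3_f59.
Proof. unfold d3_f40, d3_f58, d3_f59.
  solve_cd 3 [(V 4); (I (I (I (V 4) (V 4)) (V 5)) (I (V 6) (V 5))); (V 2); (V 4); (V 4); (V 5); (V 6)] [4; 5; 3; 6; 0; 1; 2] [4; 5; 6; 2; 0; 1; 3].
Qed.
Lemma d3_s60 : cd d3_f59 d3_f39 d3_f60.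
Proof. unfold d3_f59, d3_f39, d3_f60.
  solve_cd 4 [(V 0); (V 1); (I (V 0) (V 0)); (I (I (I (V 0) (V 0)) (V 1)) (I (I (V 0) (V 0)) (V 1))); (I (I (V 0) (V 0)) (V 1))] [0; 1; 2; 3; 4] [0; 1; 2; 3; 4].
Qed.
Lemma d3_s61 : cd d3_f31 d3_f40 d3_f61.
Proof. unfold d3_f31, d3_f40, d3_f61.
  solve_cd 4 [(I (V 4) (V 4)); (V 1); (V 2); (I (I (I (V 1) (V 2)) (V 6)) (V 6)); (V 4); (I (V 1) (V 2)); (V 6)] [3; 0; 1; 4; 5; 6; 2] [1; 2; 6; 0; 3; 4; 5].
Qed.
Lemma d3_s62 : cd d3_f60 d3_f61 d3_f62.
Proof. unfold d3_f60, d3_f61, d3_f62.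
  solve_cd 2 [(V 3); (I (I (I (V 3) (V 3)) (V 4)) (V 4)); (V 3); (V 3); (V 4)] [2; 3; 4; 0; 1] [3; 4; 0; 1; 2].
Qed.
Lemma d3_s63 : cd d3_f57 d3_f62 d3_f63.
Proof. unfold d3_f57, d3_f62, d3_f63.
  solve_cd 2 [(V 2); (I (I (I (V 2) (V 2)) (V 3)) (V 3)); (V 2); (V 3)] [2; 3; 0; 1] [2; 3; 0; 1].
Qed.
Lemma d3_s64 : cd d3_f2 d3_f63 d3_f64.
Proof. unfold d3_f2, d3_f63, d3_f64.
  solve_cd 4 [(V 4); (I (I (V 4) (V 4)) (V 5)); (V 5); (V 3); (V 4); (V 5)] [3; 4; 5; 0; 1; 2] [3; 4; 5; 0; 1; 2].
Qed.
Lemma d3_s65 : cd d3_f40 d3_f32 d3_f65.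
Proof. unfold d3_f40, d3_f32, d3_f65.
  solve_cd 3 [(V 0); (I (I (I (V 4) (I (V 5) (V 5))) (V 6)) (V 6)); (V 2); (I (V 0) (V 0)); (V 4); (V 5); (V 6)] [4; 5; 3; 6; 0; 1; 2] [4; 5; 6; 2; 0; 1; 3].
Qed.
Lemma d3_s66 : cd d3_f1 d3_f65 d3_f66.
Proof. unfold d3_f1, d3_f65, d3_f66.
  solve_cd 4 [(I (I (V 4) (I (V 5) (V 5))) (V 6)); (V 6); (V 2); (I (V 2) (V 6)); (V 4); (V 5); (V 6); (I (V 2) (V 6))] [4; 5; 0; 6; 1; 2; 3; 7] [2; 4; 5; 6; 0; 1; 3; 7].
Qed.
Lemma d3_s67 : cd d3_f1 d3_f66 d3_f67.
Proof. unfold d3_f1, d3_f66, d3_f67.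
  solve_cd 4 [(V 0); (V 7); (I (V 5) (I (V 6) (V 6))); (I (I (V 0) (V 7)) (V 7)); (I (V 0) (V 7)); (V 5); (V 6); (V 7)] [2; 4; 5; 6; 7; 0; 1; 3] [5; 6; 0; 7; 1; 2; 3; 4].
Qed.
Lemma d3_s68 : cd d3_f67 d3_f55 d3_f68.
Proof. unfold d3_f67, d3_f55, d3_f68.
  solve_cd 4 [(V 5); (V 5); (I (V 5) (I (V 5) (V 5))); (V 3); (V 5); (V 5)] [2; 3; 4; 1; 5; 0] [5; 3; 0; 1; 2; 4].
Qed.
Lemma d3_s69 : cd d3_f1 d3_f68 d3_f69.
Proof. unfold d3_f1, d3_f68, d3_f69.
  solve_cd 4 [(V 4); (I (V 4) (V 4)); (V 2); (I (V 2) (I (V 4) (V 4))); (V 4); (I (V 2) (I (V 4) (V 4)))] [2; 3; 0; 4; 1; 5] [2; 4; 0; 1; 3; 5].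
Qed.
Lemma d3_s70 : cd d3_f30 d3_f69 d3_f70.
Proof. unfold d3_f30, d3_f69, d3_f70.
  solve_cd 4 [(V 4); (V 5); (I (V 4) (I (V 5) (V 5))); (V 3); (V 4); (V 5)] [3; 4; 5; 2; 0; 1] [4; 5; 3; 0; 1; 2].
Qed.
Lemma d3_s71 : cd d3_f2 d3_f56 d3_f71.
Proof. unfold d3_f2, d3_f56, d3_f71.
  solve_cd 4 [(V 4); (V 4); (V 4); (V 3); (V 4)] [2; 3; 4; 0; 1] [3; 4; 0; 1; 2].
Qed.
Lemma d3_s72 : cd d3_f30 d3_f71 d3_f72.
Proof. unfold d3_f30, d3_f71, d3_f72.
  solve_cd 4 [(V 4); (V 5); (I (V 5) (I (V 4) (V 5))); (V 3); (V 4); (V 5)] [3; 4; 5; 2; 1; 0] [5; 4; 3; 0; 1; 2].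
Qed.
Lemma d3_s73 : cd d3_f1 d3_f53 d3_f73.
Proof. unfold d3_f1, d3_f53, d3_f73.
  solve_cd 4 [(V 0); (V 5); (V 5); (I (V 5) (V 5)); (I (V 0) (V 5)); (V 5)] [1; 2; 3; 4; 5; 0] [5; 0; 1; 2; 3; 4].
Qed.
Lemma d3_s74 : cd d3_f61 d3_f73 d3_f74.
Proof. unfold d3_f61, d3_f73, d3_f74.
  solve_cd 3 [(I (V 3) (V 4)); (I (V 3) (V 3)); (V 2); (V 3); (V 4)] [3; 4; 2; 0; 1] [3; 4; 2; 0; 1].
Qed.
Lemma d3_s75 : cd d3_f1 d3_f74 d3_f75.
Proof. unfold d3_f1, d3_f74, d3_f75.
  solve_cd 4 [(I (V 4) (V 5)); (I (V 4) (V 4)); (V 2); (I (V 2) (I (V 4) (V 4))); (V 4); (V 5); (I (V 2) (I (V 4) (V 4)))] [3; 4; 0; 5; 1; 2; 6] [2; 4; 5; 0; 1; 3; 6].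
Qed.
Lemma d3_s76 : cd d3_f72 d3_f75 d3_f76.
Proof. unfold d3_f72, d3_f75, d3_f76.
  solve_cd 3 [(V 5); (V 4); (I (V 5) (I (V 4) (V 4))); (V 5); (V 4); (V 5)] [2; 3; 4; 5; 0; 1] [4; 5; 0; 1; 2; 3].
Qed.
Lemma d3_s77 : cd d3_f70 d3_f76 d3_f77.
Proof. unfold d3_f70, d3_f76, d3_f77.
  solve_cd 3 [(V 3); (V 1); (I (I (V 1) (V 1)) (I (V 3) (V 3))); (V 3); (I (V 1) (V 1))] [2; 1; 3; 0; 4] [3; 1; 0; 2; 4].
Qed.
Lemma d3_s78 : cd d3_f64 d3_f77 d3_f78.
Proof. unfold d3_f64, d3_f77, d3_f78.
  solve_cd 3 [(I (V 3) (V 4)); (V 4); (I (V 3) (V 3)); (V 3); (V 4)] [2; 3; 4; 1; 0] [4; 3; 0; 1; 2].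
Qed.
Lemma d3_s79 : cd d3_f2 d3_f78 d3_f79.
Proof. unfold d3_f2, d3_f78, d3_f79.
  solve_cd 4 [(V 4); (I (V 5) (V 4)); (I (V 5) (V 5)); (V 3); (V 4); (V 5)] [3; 4; 5; 0; 2; 1] [3; 5; 4; 0; 1; 2].
Qed.
Lemma d3_s80 : cd d3_f1 d3_f75 d3_f80.
Proof. unfold d3_f1, d3_f75, d3_f80.
  solve_cd 4 [(V 0); (V 6); (V 5); (I (I (V 0) (V 6)) (I (V 5) (V 5))); (I (V 0) (V 6)); (V 5); (V 6)] [1; 3; 4; 5; 6; 0; 2] [5; 0; 6; 1; 2; 3; 4].
Qed.
Lemma d3_s81 : cd d3_f70 d3_f80 d3_f81.
Proof. unfold d3_f70, d3_f80, d3_f81.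
  solve_cd 3 [(V 3); (V 1); (I (I (I (V 1) (V 1)) (V 5)) (I (V 3) (V 3))); (V 3); (I (V 1) (V 1)); (V 5)] [3; 1; 4; 0; 5; 2] [3; 1; 5; 0; 2; 4].
Qed.
Lemma d3_s82 : cd d3_f64 d3_f81 d3_f82.
Proof. unfold d3_f64, d3_f81, d3_f82.
  solve_cd 3 [(I (V 3) (V 4)); (I (V 4) (V 4)); (I (V 3) (V 3)); (V 3); (V 4); (I (V 4) (V 4))] [2; 3; 4; 1; 0; 5] [4; 3; 0; 1; 2; 5].
Qed.
Lemma d3_s83 : cd d3_f79 d3_f82 d3_f83.
Proof. unfold d3_f79, d3_f82, d3_f83.
  solve_cd 3 [(I (V 3) (V 3)); (I (V 4) (V 3)); (I (V 4) (V 4)); (V 3); (V 4)] [2; 3; 4; 1; 0] [4; 3; 0; 1; 2].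
Qed.
Definition d3_p : proof := [(d3_f0, Ax); (d3_f1, Det 0 0); (d3_f2, Det 1 1); (d3_f3, Ax); (d3_f4, Det 0 3); (d3_f5, Ax); (d3_f6, Det 4 5); (d3_f7, Det 0 6); (d3_f8, Det 0 7); (d3_f9, Det 0 8); (d3_f10, Det 1 9); (d3_f11, Det 3 6); (d3_f12, Det 0 11); (d3_f13, Det 4 12); (d3_f14, Det 0 13); (d3_f15, Det 0 5); (d3_f16, Det 15 7); (d3_f17, Det 14 16); (d3_f18, Det 2 17); (d3_f19, Det 1 0); (d3_f20, Det 19 17); (d3_f21, Det 20 5); (d3_f22, Det 18 21); (d3_f23, Det 2 22); (d3_f24, Det 23 23); (d3_f25, Det 24 24); (d3_f26, Det 10 17); (d3_f27, Det 26 8); (d3_f28, Det 2 27); (d3_f29, Det 25 28); (d3_f30, Det 9 0); (d3_f31, Det 30 18); (d3_f32, Det 23 31); (d3_f33, Det 32 32); (d3_f34, Det 29 33); (d3_f35, Det 12 7); (d3_f36, Det 0 35); (d3_f37, Det 26 26); (d3_f38, Det 36 37); (d3_f39, Det 16 38); (d3_f40, Det 1 25); (d3_f41, Det 39 40); (d3_f42, Det 25 41); (d3_f43, Det 18 37); (d3_f44, Det 2 43); (d3_f45, Det 25 44); (d3_f46, Det 1 37); (d3_f47, Det 2 46); (d3_f48, Det 23 47); (d3_f49, Det 48 48); (d3_f50, Det 1 49); (d3_f51, Det 50 40); (d3_f52, Det 45 51); (d3_f53, Det 42 52); (d3_f54, Det 31 2); (d3_f55, Det 53 54); (d3_f56,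 Det 34 55); (d3_f57, Det 10 56); (d3_f58, Det 31 10); (d3_f59, Det 40 58); (d3_f60, Det 59 39); (d3_f61, Det 31 40); (d3_f62, Det 60 61); (d3_f63, Det 57 62); (d3_f64, Det 2 63); (d3_f65, Det 40 32); (d3_f66, Det 1 65); (d3_f67, Det 1 66); (d3_f68, Det 67 55); (d3_f69, Det 1 68); (d3_f70, Det 30 69); (d3_f71, Det 2 56); (d3_f72, Det 30 71); (d3_f73, Det 1 53); (d3_f74, Det 61 73); (d3_f75, Det 1 74); (d3_f76, Det 72 75); (d3_f77, Det 70 76); (d3_f78, Det 64 77); (d3_f79, Det 2 78); (d3_f80, Det 1 75); (d3_f81, Det 70 80); (d3_f82, Det 64 81); (d3_f83, Det 79 82)].
Lemma d3_ok : valid_proof d3_p /\ dn_free d3_p.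
Proof.
 split.
 - intros k e H.
   destruct k as [|k]; [injection H as <-; exists (fun j => j), L1; split; [apply renaming_id|]; split; [tauto|]; reflexivity|].
   destruct k as [|k]; [injection H as <-; simpl; split; [lia|split; [lia|]]; exists (d3_f0, Ax), (d3_f0, Ax); split; [reflexivity|split; [reflexivity|exact d3_s1]]|].
   destruct k as [|k]; [injection H as <-; simpl; split; [lia|split; [lia|]]; exists (d3_f1, Det 0 0), (d3_f1, Det 0 0); split; [reflexivity|split; [reflexivity|exact d3_s2]]|].
   destruct k as [|k]; [injection H as <-; exists (fun j => j), L3; split; [apply renaming_id|]; split; [tauto|]; reflexivity|].
   destruct k as [|k]; [injection H as <-; simpl; split; [lia|split; [lia|]]; exists (d3_f0, Ax), (d3_f3, Ax); split; [reflexivity|split; [reflexivity|exact d3_s4]]|].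
   destruct k as [|k]; [injection H as <-; exists (fun j => j), L2; split; [apply renaming_id|]; split; [tauto|]; reflexivity|].
   destruct k as [|k]; [injection H as <-; simpl; split; [lia|split; [lia|]]; exists (d3_f4, Det 0 3), (d3_f5, Ax); split; [reflexivity|split; [reflexivity|exact d3_s6]]|].
   destruct k as [|k]; [injection H as <-; simpl; split; [lia|split; [lia|]]; exists (d3_f0, Ax), (d3_f6, Det 4 5); split; [reflexivity|split; [reflexivity|exact d3_s7]]|].
   destruct k as [|k]; [injection H as <-; simpl; split; [lia|split; [lia|]]; exists (d3_f0, Ax), (d3_f7, Det 0 6); split; [reflexivity|split; [reflexivity|exact d3_s8]]|].
   destruct k as [|k]; [injection H as <-; simpl; split; [lia|split; [lia|]]; exists (d3_f0, Ax), (d3_f8, Det 0 7); split; [reflexivity|split; [reflexivity|exact d3_s9]]|].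
   destruct k as [|k]; [injection H as <-; simpl; split; [lia|split; [lia|]]; exists (d3_f1, Det 0 0), (d3_f9, Det 0 8); split; [reflexivity|split; [reflexivity|exact d3_s10]]|].
   destruct k as [|k]; [injection H as <-; simpl; split; [lia|split; [lia|]]; exists (d3_f3, Ax), (d3_f6, Det 4 5); split; [reflexivity|split; [reflexivity|exact d3_s11]]|].
   destruct k as [|k]; [injection H as <-; simpl; split; [lia|split; [lia|]]; exists (d3_f0, Ax), (d3_f11, Det 3 6); split; [reflexivity|split; [reflexivity|exact d3_s12]]|].
   destruct k as [|k]; [injection H as <-; simpl; split; [lia|split; [lia|]]; exists (d3_f4, Det 0 3), (d3_f12, Det 0 11); split; [reflexivity|split; [reflexivity|exact d3_s13]]|].
   destruct k as [|k]; [injection H as <-; simpl; split; [lia|split; [lia|]]; exists (d3_f0, Ax), (d3_f13, Det 4 12); split; [reflexivity|split; [reflexivity|exact d3_s14]]|].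
   destruct k as [|k]; [injection H as <-; simpl; split; [lia|split; [lia|]]; exists (d3_f0, Ax), (d3_f5, Ax); split; [reflexivity|split; [reflexivity|exact d3_s15]]|].
   destruct k as [|k]; [injection H as <-; simpl; split; [lia|split; [lia|]]; exists (d3_f15, Det 0 5), (d3_f7, Det 0 6); split; [reflexivity|split; [reflexivity|exact d3_s16]]|].
   destruct k as [|k]; [injection H as <-; simpl; split; [lia|split; [lia|]]; exists (d3_f14, Det 0 13), (d3_f16, Det 15 7); split; [reflexivity|split; [reflexivity|exact d3_s17]]|].
   destruct k as [|k]; [injection H as <-; simpl; split; [lia|split; [lia|]]; exists (d3_f2, Det 1 1), (d3_f17, Det 14 16); split; [reflexivity|split; [reflexivity|exact d3_s18]]|].
   destruct k as [|k]; [injection H as <-; simpl; split; [lia|split; [lia|]]; exists (d3_f1, Det 0 0), (d3_f0, Ax); split; [reflexivity|split; [reflexivity|exact d3_s19]]|].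
   destruct k as [|k]; [injection H as <-; simpl; split; [lia|split; [lia|]]; exists (d3_f19, Det 1 0), (d3_f17, Det 14 16); split; [reflexivity|split; [reflexivity|exact d3_s20]]|].
   destruct k as [|k]; [injection H as <-; simpl; split; [lia|split; [lia|]]; exists (d3_f20, Det 19 17), (d3_f5, Ax); split; [reflexivity|split; [reflexivity|exact d3_s21]]|].
   destruct k as [|k]; [injection H as <-; simpl; split; [lia|split; [lia|]]; exists (d3_f18, Det 2 17), (d3_f21, Det 20 5); split; [reflexivity|split; [reflexivity|exact d3_s22]]|].
   destruct k as [|k]; [injection H as <-; simpl; split; [lia|split; [lia|]]; exists (d3_f2, Det 1 1), (d3_f22, Det 18 21); split; [reflexivity|split; [reflexivity|exact d3_s23]]|].
   destruct k as [|k]; [injection H as <-; simpl; split; [lia|split; [lia|]]; exists (d3_f23, Det 2 22), (d3_f23, Det 2 22); split; [reflexivity|split; [reflexivity|exact d3_s24]]|].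
   destruct k as [|k]; [injection H as <-; simpl; split; [lia|split; [lia|]]; exists (d3_f24, Det 23 23), (d3_f24, Det 23 23); split; [reflexivity|split; [reflexivity|exact d3_s25]]|].
   destruct k as [|k]; [injection H as <-; simpl; split; [lia|split; [lia|]]; exists (d3_f10, Det 1 9), (d3_f17, Det 14 16); split; [reflexivity|split; [reflexivity|exact d3_s26]]|].
   destruct k as [|k]; [injection H as <-; simpl; split; [lia|split; [lia|]]; exists (d3_f26, Det 10 17), (d3_f8, Det 0 7); split; [reflexivity|split; [reflexivity|exact d3_s27]]|].
   destruct k as [|k]; [injection H as <-; simpl; split; [lia|split; [lia|]]; exists (d3_f2, Det 1 1), (d3_f27, Det 26 8); split; [reflexivity|split; [reflexivity|exact d3_s28]]|].
   destruct k as [|k]; [injection H as <-; simpl; split; [lia|split; [lia|]]; exists (d3_f25, Det 24 24), (d3_f28, Det 2 27); split; [reflexivity|split; [reflexivity|exact d3_s29]]|].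
   destruct k as [|k]; [injection H as <-; simpl; split; [lia|split; [lia|]]; exists (d3_f9, Det 0 8), (d3_f0, Ax); split; [reflexivity|split; [reflexivity|exact d3_s30]]|].
   destruct k as [|k]; [injection H as <-; simpl; split; [lia|split; [lia|]]; exists (d3_f30, Det 9 0), (d3_f18, Det 2 17); split; [reflexivity|split; [reflexivity|exact d3_s31]]|].
   destruct k as [|k]; [injection H as <-; simpl; split; [lia|split; [lia|]]; exists (d3_f23, Det 2 22), (d3_f31, Det 30 18); split; [reflexivity|split; [reflexivity|exact d3_s32]]|].
   destruct k as [|k]; [injection H as <-; simpl; split; [lia|split; [lia|]]; exists (d3_f32, Det 23 31), (d3_f32, Det 23 31); split; [reflexivity|split; [reflexivity|exact d3_s33]]|].
   destruct k as [|k]; [injection H as <-; simpl; split; [lia|split; [lia|]]; exists (d3_f29, Det 25 28), (d3_f33, Det 32 32); split; [reflexivity|split; [reflexivity|exact d3_s34]]|].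
   destruct k as [|k]; [injection H as <-; simpl; split; [lia|split; [lia|]]; exists (d3_f12, Det 0 11), (d3_f7, Det 0 6); split; [reflexivity|split; [reflexivity|exact d3_s35]]|].
   destruct k as [|k]; [injection H as <-; simpl; split; [lia|split; [lia|]]; exists (d3_f0, Ax), (d3_f35, Det 12 7); split; [reflexivity|split; [reflexivity|exact d3_s36]]|].
   destruct k as [|k]; [injection H as <-; simpl; split; [lia|split; [lia|]]; exists (d3_f26, Det 10 17), (d3_f26, Det 10 17); split; [reflexivity|split; [reflexivity|exact d3_s37]]|].
   destruct k as [|k]; [injection H as <-; simpl; split; [lia|split; [lia|]]; exists (d3_f36, Det 0 35), (d3_f37, Det 26 26); split; [reflexivity|split; [reflexivity|exact d3_s38]]|].
   destruct k as [|k]; [injection H as <-; simpl; split; [lia|split; [lia|]]; exists (d3_f16, Det 15 7), (d3_f38, Det 36 37); split; [reflexivity|split; [reflexivity|exact d3_s39]]|].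
   destruct k as [|k]; [injection H as <-; simpl; split; [lia|split; [lia|]]; exists (d3_f1, Det 0 0), (d3_f25, Det 24 24); split; [reflexivity|split; [reflexivity|exact d3_s40]]|].
   destruct k as [|k]; [injection H as <-; simpl; split; [lia|split; [lia|]]; exists (d3_f39, Det 16 38), (d3_f40, Det 1 25); split; [reflexivity|split; [reflexivity|exact d3_s41]]|].
   destruct k as [|k]; [injection H as <-; simpl; split; [lia|split; [lia|]]; exists (d3_f25, Det 24 24), (d3_f41, Det 39 40); split; [reflexivity|split; [reflexivity|exact d3_s42]]|].
   destruct k as [|k]; [injection H as <-; simpl; split; [lia|split; [lia|]]; exists (d3_f18, Det 2 17), (d3_f37, Det 26 26); split; [reflexivity|split; [reflexivity|exact d3_s43]]|].
   destruct k as [|k]; [injection H as <-; simpl; split; [lia|split; [lia|]]; exists (d3_f2, Det 1 1), (d3_f43, Det 18 37); split; [reflexivity|split; [reflexivity|exact d3_s44]]|].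
   destruct k as [|k]; [injection H as <-; simpl; split; [lia|split; [lia|]]; exists (d3_f25, Det 24 24), (d3_f44, Det 2 43); split; [reflexivity|split; [reflexivity|exact d3_s45]]|].
   destruct k as [|k]; [injection H as <-; simpl; split; [lia|split; [lia|]]; exists (d3_f1, Det 0 0), (d3_f37, Det 26 26); split; [reflexivity|split; [reflexivity|exact d3_s46]]|].
   destruct k as [|k]; [injection H as <-; simpl; split; [lia|split; [lia|]]; exists (d3_f2, Det 1 1), (d3_f46, Det 1 37); split; [reflexivity|split; [reflexivity|exact d3_s47]]|].
   destruct k as [|k]; [injection H as <-; simpl; split; [lia|split; [lia|]]; exists (d3_f23, Det 2 22), (d3_f47, Det 2 46); split; [reflexivity|split; [reflexivity|exact d3_s48]]|].
   destruct k as [|k]; [injection H as <-; simpl; split; [lia|split; [lia|]]; exists (d3_f48, Det 23 47), (d3_f48, Det 23 47); split; [reflexivity|split; [reflexivity|exact d3_s49]]|].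
   destruct k as [|k]; [injection H as <-; simpl; split; [lia|split; [lia|]]; exists (d3_f1, Det 0 0), (d3_f49, Det 48 48); split; [reflexivity|split; [reflexivity|exact d3_s50]]|].
   destruct k as [|k]; [injection H as <-; simpl; split; [lia|split; [lia|]]; exists (d3_f50, Det 1 49), (d3_f40, Det 1 25); split; [reflexivity|split; [reflexivity|exact d3_s51]]|].
   destruct k as [|k]; [injection H as <-; simpl; split; [lia|split; [lia|]]; exists (d3_f45, Det 25 44), (d3_f51, Det 50 40); split; [reflexivity|split; [reflexivity|exact d3_s52]]|].
   destruct k as [|k]; [injection H as <-; simpl; split; [lia|split; [lia|]]; exists (d3_f42, Det 25 41), (d3_f52, Det 45 51); split; [reflexivity|split; [reflexivity|exact d3_s53]]|].
   destruct k as [|k]; [injection H as <-; simpl; split; [lia|split; [lia|]]; exists (d3_f31, Det 30 18), (d3_f2, Det 1 1); split; [reflexivity|split; [reflexivity|exact d3_s54]]|].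
   destruct k as [|k]; [injection H as <-; simpl; split; [lia|split; [lia|]]; exists (d3_f53, Det 42 52), (d3_f54, Det 31 2); split; [reflexivity|split; [reflexivity|exact d3_s55]]|].
   destruct k as [|k]; [injection H as <-; simpl; split; [lia|split; [lia|]]; exists (d3_f34, Det 29 33), (d3_f55, Det 53 54); split; [reflexivity|split; [reflexivity|exact d3_s56]]|].
   destruct k as [|k]; [injection H as <-; simpl; split; [lia|split; [lia|]]; exists (d3_f10, Det 1 9), (d3_f56, Det 34 55); split; [reflexivity|split; [reflexivity|exact d3_s57]]|].
   destruct k as [|k]; [injection H as <-; simpl; split; [lia|split; [lia|]]; exists (d3_f31, Det 30 18), (d3_f10, Det 1 9); split; [reflexivity|split; [reflexivity|exact d3_s58]]|].
   destruct k as [|k]; [injection H as <-; simpl; split; [lia|split; [lia|]]; exists (d3_f40, Det 1 25), (d3_f58, Det 31 10); split; [reflexivity|split; [reflexivity|exact d3_s59]]|].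
   destruct k as [|k]; [injection H as <-; simpl; split; [lia|split; [lia|]]; exists (d3_f59, Det 40 58), (d3_f39, Det 16 38); split; [reflexivity|split; [reflexivity|exact d3_s60]]|].
   destruct k as [|k]; [injection H as <-; simpl; split; [lia|split; [lia|]]; exists (d3_f31, Det 30 18), (d3_f40, Det 1 25); split; [reflexivity|split; [reflexivity|exact d3_s61]]|].
   destruct k as [|k]; [injection H as <-; simpl; split; [lia|split; [lia|]]; exists (d3_f60, Det 59 39), (d3_f61, Det 31 40); split; [reflexivity|split; [reflexivity|exact d3_s62]]|].
   destruct k as [|k]; [injection H as <-; simpl; split; [lia|split; [lia|]]; exists (d3_f57, Det 10 56), (d3_f62, Det 60 61); split; [reflexivity|split; [reflexivity|exact d3_s63]]|].
   destruct k as [|k]; [injection H as <-; simpl; split; [lia|split; [lia|]]; exists (d3_f2, Det 1 1), (d3_f63, Det 57 62); split; [reflexivity|split; [reflexivity|exact d3_s64]]|].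
   destruct k as [|k]; [injection H as <-; simpl; split; [lia|split; [lia|]]; exists (d3_f40, Det 1 25), (d3_f32, Det 23 31); split; [reflexivity|split; [reflexivity|exact d3_s65]]|].
   destruct k as [|k]; [injection H as <-; simpl; split; [lia|split; [lia|]]; exists (d3_f1, Det 0 0), (d3_f65, Det 40 32); split; [reflexivity|split; [reflexivity|exact d3_s66]]|].
   destruct k as [|k]; [injection H as <-; simpl; split; [lia|split; [lia|]]; exists (d3_f1, Det 0 0), (d3_f66, Det 1 65); split; [reflexivity|split; [reflexivity|exact d3_s67]]|].
   destruct k as [|k]; [injection H as <-; simpl; split; [lia|split; [lia|]]; exists (d3_f67, Det 1 66), (d3_f55, Det 53 54); split; [reflexivity|split; [reflexivity|exact d3_s68]]|].
   destruct k as [|k]; [injection H as <-; simpl; split; [lia|split; [lia|]]; exists (d3_f1, Det 0 0), (d3_f68, Det 67 55); split; [reflexivity|split; [reflexivity|exact d3_s69]]|].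
   destruct k as [|k]; [injection H as <-; simpl; split; [lia|split; [lia|]]; exists (d3_f30, Det 9 0), (d3_f69, Det 1 68); split; [reflexivity|split; [reflexivity|exact d3_s70]]|].
   destruct k as [|k]; [injection H as <-; simpl; split; [lia|split; [lia|]]; exists (d3_f2, Det 1 1), (d3_f56, Det 34 55); split; [reflexivity|split; [reflexivity|exact d3_s71]]|].
   destruct k as [|k]; [injection H as <-; simpl; split; [lia|split; [lia|]]; exists (d3_f30, Det 9 0), (d3_f71, Det 2 56); split; [reflexivity|split; [reflexivity|exact d3_s72]]|].
   destruct k as [|k]; [injection H as <-; simpl; split; [lia|split; [lia|]]; exists (d3_f1, Det 0 0), (d3_f53, Det 42 52); split; [reflexivity|split; [reflexivity|exact d3_s73]]|].
   destruct k as [|k]; [injection H as <-; simpl; split; [lia|split; [lia|]]; exists (d3_f61, Det 31 40), (d3_f73, Det 1 53); split; [reflexivity|split; [reflexivity|exact d3_s74]]|].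
   destruct k as [|k]; [injection H as <-; simpl; split; [lia|split; [lia|]]; exists (d3_f1, Det 0 0), (d3_f74, Det 61 73); split; [reflexivity|split; [reflexivity|exact d3_s75]]|].
   destruct k as [|k]; [injection H as <-; simpl; split; [lia|split; [lia|]]; exists (d3_f72, Det 30 71), (d3_f75, Det 1 74); split; [reflexivity|split; [reflexivity|exact d3_s76]]|].
   destruct k as [|k]; [injection H as <-; simpl; split; [lia|split; [lia|]]; exists (d3_f70, Det 30 69), (d3_f76, Det 72 75); split; [reflexivity|split; [reflexivity|exact d3_s77]]|].
   destruct k as [|k]; [injection H as <-; simpl; split; [lia|split; [lia|]]; exists (d3_f64, Det 2 63), (d3_f77, Det 70 76); split; [reflexivity|split; [reflexivity|exact d3_s78]]|].
   destruct k as [|k]; [injection H as <-; simpl; split; [lia|split; [lia|]]; exists (d3_f2, Det 1 1), (d3_f78, Det 64 77); split; [reflexivity|split; [reflexivity|exact d3_s79]]|].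
   destruct k as [|k]; [injection H as <-; simpl; split; [lia|split; [lia|]]; exists (d3_f1, Det 0 0), (d3_f75, Det 1 74); split; [reflexivity|split; [reflexivity|exact d3_s80]]|].
   destruct k as [|k]; [injection H as <-; simpl; split; [lia|split; [lia|]]; exists (d3_f70, Det 30 69), (d3_f80, Det 1 75); split; [reflexivity|split; [reflexivity|exact d3_s81]]|].
   destruct k as [|k]; [injection H as <-; simpl; split; [lia|split; [lia|]]; exists (d3_f64, Det 2 63), (d3_f81, Det 70 80); split; [reflexivity|split; [reflexivity|exact d3_s82]]|].
   destruct k as [|k]; [injection H as <-; simpl; split; [lia|split; [lia|]]; exists (d3_f79, Det 2 78), (d3_f82, Det 64 81); split; [reflexivity|split; [reflexivity|exact d3_s83]]|].
   destruct k; discriminate H.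
 - intros k e H Hj.
   destruct k as [|k]; [injection H as <-; simpl in Hj; congruence|].
   destruct k as [|k]; [injection H as <-; unfold d3_f1; simpl; tauto|].
   destruct k as [|k]; [injection H as <-; unfold d3_f2; simpl; tauto|].
   destruct k as [|k]; [injection H as <-; simpl in Hj; congruence|].
   destruct k as [|k]; [injection H as <-; unfold d3_f4; simpl; tauto|].
   destruct k as [|k]; [injection H as <-; simpl in Hj; congruence|].
   destruct k as [|k]; [injection H as <-; unfold d3_f6; simpl; tauto|].
   destruct k as [|k]; [injection H as <-; unfold d3_f7; simpl; tauto|].
   destruct k as [|k]; [injection H as <-; unfold d3_f8; simpl; tauto|].
   destruct k as [|k]; [injection H as <-; unfold d3_f9; simpl; tauto|].
   destruct k as [|k]; [injection H as <-; unfold d3_f10; simpl; tauto|].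
   destruct k as [|k]; [injection H as <-; unfold d3_f11; simpl; tauto|].
   destruct k as [|k]; [injection H as <-; unfold d3_f12; simpl; tauto|].
   destruct k as [|k]; [injection H as <-; unfold d3_f13; simpl; tauto|].
   destruct k as [|k]; [injection H as <-; unfold d3_f14; simpl; tauto|].
   destruct k as [|k]; [injection H as <-; unfold d3_f15; simpl; tauto|].
   destruct k as [|k]; [injection H as <-; unfold d3_f16; simpl; tauto|].
   destruct k as [|k]; [injection H as <-; unfold d3_f17; simpl; tauto|].
   destruct k as [|k]; [injection H as <-; unfold d3_f18; simpl; tauto|].
   destruct k as [|k]; [injection H as <-; unfold d3_f19; simpl; tauto|].
   destruct k as [|k]; [injection H as <-; unfold d3_f20; simpl; tauto|].
   destruct k as [|k]; [injection H as <-; unfold d3_f21; simpl; tauto|].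
   destruct k as [|k]; [injection H as <-; unfold d3_f22; simpl; tauto|].
   destruct k as [|k]; [injection H as <-; unfold d3_f23; simpl; tauto|].
   destruct k as [|k]; [injection H as <-; unfold d3_f24; simpl; tauto|].
   destruct k as [|k]; [injection H as <-; unfold d3_f25; simpl; tauto|].
   destruct k as [|k]; [injection H as <-; unfold d3_f26; simpl; tauto|].
   destruct k as [|k]; [injection H as <-; unfold d3_f27; simpl; tauto|].
   destruct k as [|k]; [injection H as <-; unfold d3_f28; simpl; tauto|].
   destruct k as [|k]; [injection H as <-; unfold d3_f29; simpl; tauto|].
   destruct k as [|k]; [injection H as <-; unfold d3_f30; simpl; tauto|].
   destruct k as [|k]; [injection H as <-; unfold d3_f31; simpl; tauto|].
   destruct k as [|k]; [injection H as <-; unfold d3_f32; simpl; tauto|].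
   destruct k as [|k]; [injection H as <-; unfold d3_f33; simpl; tauto|].
   destruct k as [|k]; [injection H as <-; unfold d3_f34; simpl; tauto|].
   destruct k as [|k]; [injection H as <-; unfold d3_f35; simpl; tauto|].
   destruct k as [|k]; [injection H as <-; unfold d3_f36; simpl; tauto|].
   destruct k as [|k]; [injection H as <-; unfold d3_f37; simpl; tauto|].
   destruct k as [|k]; [injection H as <-; unfold d3_f38; simpl; tauto|].
   destruct k as [|k]; [injection H as <-; unfold d3_f39; simpl; tauto|].
   destruct k as [|k]; [injection H as <-; unfold d3_f40; simpl; tauto|].
   destruct k as [|k]; [injection H as <-; unfold d3_f41; simpl; tauto|].
   destruct k as [|k]; [injection H as <-; unfold d3_f42; simpl; tauto|].
   destruct k as [|k]; [injection H as <-; unfold d3_f43; simpl; tauto|].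
   destruct k as [|k]; [injection H as <-; unfold d3_f44; simpl; tauto|].
   destruct k as [|k]; [injection H as <-; unfold d3_f45; simpl; tauto|].
   destruct k as [|k]; [injection H as <-; unfold d3_f46; simpl; tauto|].
   destruct k as [|k]; [injection H as <-; unfold d3_f47; simpl; tauto|].
   destruct k as [|k]; [injection H as <-; unfold d3_f48; simpl; tauto|].
   destruct k as [|k]; [injection H as <-; unfold d3_f49; simpl; tauto|].
   destruct k as [|k]; [injection H as <-; unfold d3_f50; simpl; tauto|].
   destruct k as [|k]; [injection H as <-; unfold d3_f51; simpl; tauto|].
   destruct k as [|k]; [injection H as <-; unfold d3_f52; simpl; tauto|].
   destruct k as [|k]; [injection H as <-; unfold d3_f53; simpl; tauto|].
   destruct k as [|k]; [injection H as <-; unfold d3_f54; simpl; tauto|].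
   destruct k as [|k]; [injection H as <-; unfold d3_f55; simpl; tauto|].
   destruct k as [|k]; [injection H as <-; unfold d3_f56; simpl; tauto|].
   destruct k as [|k]; [injection H as <-; unfold d3_f57; simpl; tauto|].
   destruct k as [|k]; [injection H as <-; unfold d3_f58; simpl; tauto|].
   destruct k as [|k]; [injection H as <-; unfold d3_f59; simpl; tauto|].
   destruct k as [|k]; [injection H as <-; unfold d3_f60; simpl; tauto|].
   destruct k as [|k]; [injection H as <-; unfold d3_f61; simpl; tauto|].
   destruct k as [|k]; [injection H as <-; unfold d3_f62; simpl; tauto|].
   destruct k as [|k]; [injection H as <-; unfold d3_f63; simpl; tauto|].
   destruct k as [|k]; [injection H as <-; unfold d3_f64; simpl; tauto|].
   destruct k as [|k]; [injection H as <-; unfold d3_f65; simpl; tauto|].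
   destruct k as [|k]; [injection H as <-; unfold d3_f66; simpl; tauto|].
   destruct k as [|k]; [injection H as <-; unfold d3_f67; simpl; tauto|].
   destruct k as [|k]; [injection H as <-; unfold d3_f68; simpl; tauto|].
   destruct k as [|k]; [injection H as <-; unfold d3_f69; simpl; tauto|].
   destruct k as [|k]; [injection H as <-; unfold d3_f70; simpl; tauto|].
   destruct k as [|k]; [injection H as <-; unfold d3_f71; simpl; tauto|].
   destruct k as [|k]; [injection H as <-; unfold d3_f72; simpl; tauto|].
   destruct k as [|k]; [injection H as <-; unfold d3_f73; simpl; tauto|].
   destruct k as [|k]; [injection H as <-; unfold d3_f74; simpl; tauto|].
   destruct k as [|k]; [injection H as <-; unfold d3_f75; simpl; tauto|].
   destruct k as [|k]; [injection H as <-; unfold d3_f76; simpl; tauto|].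
   destruct k as [|k]; [injection H as <-; unfold d3_f77; simpl; tauto|].
   destruct k as [|k]; [injection H as <-; unfold d3_f78; simpl; tauto|].
   destruct k as [|k]; [injection H as <-; unfold d3_f79; simpl; tauto|].
   destruct k as [|k]; [injection H as <-; unfold d3_f80; simpl; tauto|].
   destruct k as [|k]; [injection H as <-; unfold d3_f81; simpl; tauto|].
   destruct k as [|k]; [injection H as <-; unfold d3_f82; simpl; tauto|].
   destruct k as [|k]; [injection H as <-; unfold d3_f83; simpl; tauto|].
   destruct k; discriminate H.
Qed.
Lemma d3_concl : concludes d3_p d3_f83.
Proof. eexists; reflexivity. Qed.

Theorem lemma5 : dnf_cd_provable D1 /\ dnf_cd_provable D2 /\ dnf_cd_provable D3.
Proof.
  split; [|split].
  - exists d1_p. destruct d1_ok as [H1 H2]. split; [exact H1|split; [eexists; reflexivity|exact H2]].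
  - exists d2_p. destruct d2_ok as [H1 H2]. split; [exact H1|split; [eexists; reflexivity|exact H2]].
  - exists d3_p. destruct d3_ok as [H1 H2]. split; [exact H1|split; [eexists; reflexivity|exact H2]].
Qed.
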